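(* Let $\theta$ be the Euler operator $\theta f(x)=xf'(x)$ on $\mathscr{A}(\mathbb{R})$ and let $P(\theta)=\sum_{k=0}^K a_k\theta^k$ with $a_0,\dots,a_K\in\mathbb{C}$ be a differential operator of degree $K\geq 2$ (i.e. $a_K\neq 0$). Then $P(\theta)$ does not generate a $C_0$-semigroup on $\mathscr{A}(\mathbb{R})$ in each of the following cases: (1) $\operatorname{Re}a_K=\dots=\operatorname{Re}a_{l+1}=0$ and $\operatorname{Re}a_l>0$ for some $l\geq 2$; (2) $a_K,\dots,a_2\in i\mathbb{Q}$.
   Context: $\mathscr{A}(\mathbb{R})$ denotes the space of real analytic functions on $\mathbb{R}$ with the inductive limit topology $\operatorname{ind}_{U\supset\mathbb{R}}H(U)$ ($U$ complex open neighbourhoods of $\mathbb{R}$, $H(U)$ with compact-open topology). A $C_0$-semigroup is a family $(T_t)_{t\ge0}$ of continuous linear operators on $\mathscr{A}(\mathbb{R})$ with $T_tT_s=T_{t+s}$, $T_0=I$, and $t\mapsto T_tf$ continuous for each $f$; its generator is $Af=\lim_{t\to0^+}(T_tf-f)/t$ on the domain where the limit exists; ''$P(\theta)$ generates'' means $P(\theta)$ (with domain $\mathscr{A}(\mathbb{R})$) is the generator. $\theta^0$ is the identity. *)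

(* Defs.v *)
From Stdlib Require Import Reals QArith List.
From Coquelicot Require Import Coquelicot.

Local Open Scope R_scope.

Notation CC := Complex.C.

Definition fadd (f g : R -> CC) : R -> CC := fun x => Cplus (f x) (g x).
Definition fsub (f g : R -> CC) : R -> CC := fun x => Cminus (f x) (g x).
Definition fscal (c : CC) (f : R -> CC) : R -> CC := fun x => Cmult c (f x).

Definition nbhdR (U : CC -> Prop) : Prop :=
  @open C_UniformSpace U /\ forall x : R, U (RtoC x).

Definition holo_on (U : CC -> Prop) (F : CC -> CC) : Prop :=
  forall z, U z -> @ex_derive C_AbsRing C_NormedModule F z.

Definition compactC (K : CC -> Prop) : Prop :=
  forall (I : Type) (O : I -> CC -> Prop),
    (forall i, @open C_UniformSpace (O i)) ->
    (forall z, K z -> exists i, O i z) ->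
    exists l : list I, forall z, K z -> exists i, In i l /\ O i z.

Definition real_analytic (f : R -> CC) : Prop :=
  exists U F, nbhdR U /\ holo_on U F /\ forall x : R, F (RtoC x) = f x.

(* ---------- topology of A(R) = ind_{U > R} H(U) (locally convex inductive
   limit).  Its continuous seminorms are exactly the seminorms on A(R) whose
   restriction to every step H(U) (compact-open topology) is continuous. *)
Definition seminormA (p : (R -> CC) -> R) : Prop :=
  (forall f g, real_analytic f -> real_analytic g ->
     p (fadd f g) <= p f + p g) /\
  (forall c f, real_analytic f -> p (fscal c f) = Cmod c * p f).

Definition cont_seminormA (p : (R -> CC) -> R) : Prop :=
  seminormA p /\
  forall U, nbhdR U ->
    exists (K : CC -> Prop) (M : R),
      compactC K /\ (forall z, K z -> U z) /\ 0 <= M /\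
      forall F, holo_on U F ->
        forall s, (forall z, K z -> Cmod (F z) <= s) ->
          p (fun x => F (RtoC x)) <= M * s.

Definition opA := (R -> CC) -> (R -> CC).

Definition cont_linear_opA (T : opA) : Prop :=
  (forall f, real_analytic f -> real_analytic (T f)) /\
  (forall f g, real_analytic f -> real_analytic g ->
     forall x, T (fadd f g) x = fadd (T f) (T g) x) /\
  (forall c f, real_analytic f -> forall x, T (fscal c f) x = fscal c (T f) x) /\
  (forall q, cont_seminormA q -> cont_seminormA (fun f => q (T f))).

Definition C0_semigroup (T : R -> opA) : Prop :=
  (forall t, 0 <= t -> cont_linear_opA (T t)) /\
  (forall t s, 0 <= t -> 0 <= s -> forall f, real_analytic f ->
     forall x, T t (T s f) x = T (t + s) f x) /\
  (forall f, real_analytic f -> forall x, T 0 f x = f x) /\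
  (forall f, real_analytic f -> forall t0, 0 <= t0 ->
     forall p, cont_seminormA p -> forall eps, 0 < eps ->
       exists delta, 0 < delta /\
         forall t, 0 <= t -> Rabs (t - t0) < delta ->
           p (fsub (T t f) (T t0 f)) < eps).

Definition generates (A : opA) (T : R -> opA) : Prop :=
  forall f, real_analytic f ->
    forall p, cont_seminormA p -> forall eps, 0 < eps ->
      exists delta, 0 < delta /\
        forall t, 0 < t -> t < delta ->
          p (fsub (fscal (RtoC (/ t)) (fsub (T t f) f)) (A f)) < eps.

Definition derivC (f : R -> CC) : R -> CC :=
  fun x => (Derive (fun y => Re (f y)) x, Derive (fun y => Im (f y)) x).

Definition theta (f : R -> CC) : R -> CC :=
  fun x => Cmult (RtoC x) (derivC f x).

Definition Ptheta (a : nat -> CC) (K : nat) : opA :=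
  fun f x => @sum_n C_AbelianMonoid (fun k => Cmult (a k) (Nat.iter k theta f x)) K.

(* Main.v *)
Require Import Defs.
From Stdlib Require Import Reals QArith Qreals Lra Psatz Lia ZArith List Classical FunctionalExtensionality.
From Coquelicot Require Import Coquelicot.
Local Open Scope R_scope.
Local Open Scope R_scope.

Lemma C_ext (z w : CC) : Re z = Re w -> Im z = Im w -> z = w.
Proof. destruct z, w; simpl; intros -> ->; reflexivity. Qed.

Definition cexp (z : CC) : CC :=
  (exp (Re z) * cos (Im z), exp (Re z) * sin (Im z)).

Lemma cexp_add (a b : CC) : cexp (a + b)%C = (cexp a * cexp b)%C.
Proof.
  destruct a as [a1 a2], b as [b1 b2]; unfold cexp; simpl.
  apply C_ext; simpl; rewrite exp_plus.
  - rewrite cos_plus; ring.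
  - rewrite sin_plus; ring.
Qed.

Lemma cexp_0 : cexp 0%C = 1%C.
Proof. unfold cexp; apply C_ext; simpl; rewrite exp_0, ?cos_0, ?sin_0; ring. Qed.

Lemma Cmod_cexp (z : CC) : Cmod (cexp z) = exp (Re z).
Proof.
  unfold cexp, Cmod; simpl.
  pose proof (sin2_cos2 (Im z)). unfold Rsqr in H.
  replace (exp (Re z) * cos (Im z) * (exp (Re z) * cos (Im z) * 1) +
     exp (Re z) * sin (Im z) * (exp (Re z) * sin (Im z) * 1)) with (exp (Re z) ^ 2)
    by (transitivity (exp (Re z) ^ 2 * (sin (Im z) * sin (Im z) + cos (Im z) * cos (Im z))); [rewrite H; ring | ring]).
  rewrite sqrt_pow2; auto. left; apply exp_pos.
Qed.

Lemma cexp_nonzero (z : CC) : cexp z <> 0%C.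
Proof.
  intro H. assert (Cmod (cexp z) = 0) by (rewrite H; apply Cmod_0).
  rewrite Cmod_cexp in H0. pose proof (exp_pos (Re z)). lra.
Qed.

Lemma cexp_opp (z : CC) : (cexp (- z)%C * cexp z)%C = 1%C.
Proof. rewrite <- cexp_add. replace (- z + z)%C with (RtoC 0) by ring. apply cexp_0. Qed.

Lemma cexp_pow (z : CC) (n : nat) : cexp (RtoC (INR n) * z)%C = (cexp z ^ n)%C.
Proof.
  induction n.
  - simpl. replace (RtoC 0 * z)%C with (RtoC 0) by ring. apply cexp_0.
  - rewrite S_INR. simpl Cpow. rewrite <- IHn, <- cexp_add. f_equal.
    apply C_ext; simpl; ring.
Qed.

Lemma RtoC_mul_re (r : R) (z : CC) : Re (RtoC r * z)%C = r * Re z.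
Proof. destruct z; simpl; ring. Qed.
Lemma RtoC_mul_im (r : R) (z : CC) : Im (RtoC r * z)%C = r * Im z.
Proof. destruct z; simpl; ring. Qed.

Lemma cexp_i_2pi (k : Z) : cexp (0, 2 * PI * IZR k) = 1%C.
Proof.
  assert (Hs : sin (PI * IZR k) = 0) by (apply sin_eq_0_1; exists k; ring).
  assert (Hs2 : sin (2 * PI * IZR k) = 0).
  { replace (2 * PI * IZR k) with (2 * (PI * IZR k)) by ring. rewrite sin_2a, Hs; ring. }
  assert (Hc2 : cos (2 * PI * IZR k) = 1).
  { replace (2 * PI * IZR k) with (2 * (PI * IZR k)) by ring. rewrite cos_2a_sin, Hs; ring. }
  unfold cexp; apply C_ext; simpl; rewrite exp_0, ?Hs2, ?Hc2; ring.
Qed.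

Lemma cexp_i_eq1 (th : R) : cexp (0, th) = 1%C -> exists k : Z, th = 2 * PI * IZR k.
Proof.
  intro H. unfold cexp in H. simpl in H. rewrite exp_0 in H.
  injection H as H1 H2.
  assert (cos th = 1) by lra.
  replace th with (2 * (th/2)) in H by field.
  rewrite cos_2a_sin in H.
  assert (sin (th/2) = 0).
  { assert (Rsqr (sin (th/2)) = 0) by (unfold Rsqr in *; lra).
    apply Rsqr_0_uniq; auto. }
  destruct (sin_eq_0_0 _ H0) as [k Hk]. exists k. lra.
Qed.

Lemma Cmod_le_sum (z : CC) : Cmod z <= Rabs (Re z) + Rabs (Im z).
Proof.
  unfold Cmod. rewrite <- (sqrt_pow2 (Rabs (Re z) + Rabs (Im z))).
  2:{ pose proof (Rabs_pos (Re z)); pose proof (Rabs_pos (Im z)); lra. }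
  apply sqrt_le_1_alt.
  replace (fst z ^ 2) with (Rabs (Re z) ^ 2) by (rewrite pow2_abs; reflexivity).
  replace (snd z ^ 2) with (Rabs (Im z) ^ 2) by (rewrite pow2_abs; reflexivity).
  pose proof (Rabs_pos (Re z)); pose proof (Rabs_pos (Im z)). nra.
Qed.

Lemma cexp_rderiv0 (w : CC) : forall eps, 0 < eps -> exists delta, 0 < delta /\
  forall h, 0 < h < delta ->
    Cmod (RtoC (/h) * (cexp (RtoC h * w) - 1) - w)%C < eps.
Proof.
  intros eps Heps.
  set (a := Re w). set (b := Im w).
  assert (D1 : derivable_pt_lim (fun h => exp (h * a) * cos (h * b)) 0 a).
  { apply is_derive_Reals. auto_derive; auto. rewrite ?Rmult_0_l, ?exp_0, ?cos_0, ?sin_0. ring. }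
  assert (D2 : derivable_pt_lim (fun h => exp (h * a) * sin (h * b)) 0 b).
  { apply is_derive_Reals. auto_derive; auto. rewrite ?Rmult_0_l, ?exp_0, ?cos_0, ?sin_0. ring. }
  destruct (D1 (eps/2)) as [d1 Hd1]; [lra|].
  destruct (D2 (eps/2)) as [d2 Hd2]; [lra|].
  exists (Rmin d1 d2). split. { apply Rmin_glb_lt; apply cond_pos. }
  intros h [Hh1 Hh2].
  assert (Hh1' : Rabs h < d1). { rewrite Rabs_right by lra. eapply Rlt_le_trans; [apply Hh2|apply Rmin_l]. }
  assert (Hh2' : Rabs h < d2). { rewrite Rabs_right by lra. eapply Rlt_le_trans; [apply Hh2|apply Rmin_r]. }
  specialize (Hd1 h ltac:(lra) Hh1'). specialize (Hd2 h ltac:(lra) Hh2').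
  rewrite ?Rplus_0_l, ?Rmult_0_l, ?exp_0, ?cos_0, ?sin_0 in Hd1, Hd2.
  eapply Rle_lt_trans; [apply Cmod_le_sum|].
  replace (Re (RtoC (/ h) * (cexp (RtoC h * w) - 1) - w)%C) with ((exp (h * a) * cos (h * b) - 1 * 1) / h - a).
  2:{ unfold Rdiv. unfold cexp. rewrite RtoC_mul_re, RtoC_mul_im. simpl. unfold a, b, Re, Im. ring. }
  replace (Im (RtoC (/ h) * (cexp (RtoC h * w) - 1) - w)%C) with ((exp (h * a) * sin (h * b) - 1 * 0) / h - b).
  2:{ unfold Rdiv. unfold cexp. rewrite RtoC_mul_re, RtoC_mul_im. simpl. unfold a, b, Re, Im. ring. }
  rewrite cos_0 in Hd1; rewrite sin_0 in Hd2. lra.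
Qed.
Local Open Scope R_scope.

Lemma Cmod_tri3 (a b c : CC) : Cmod (a - c)%C <= Cmod (a - b)%C + Cmod (b - c)%C.
Proof.
  replace (a - c)%C with ((a - b) + (b - c))%C by ring. apply Cmod_triangle.
Qed.

Lemma rderiv0_const (psi : R -> CC) :
  (forall t0, 0 <= t0 -> forall eps, 0 < eps -> exists delta, 0 < delta /\
     forall t, 0 <= t -> Rabs (t - t0) < delta -> Cmod (psi t - psi t0)%C < eps) ->
  (forall t, 0 <= t -> forall eps, 0 < eps -> exists delta, 0 < delta /\
     forall h, 0 < h < delta -> Cmod (psi (t + h)%R - psi t)%C <= eps * h) ->
  forall t, 0 <= t -> psi t = psi 0.
Proof.
  intros Hc Hd.
  assert (Main : forall b, 0 < b -> forall eps, 0 < eps -> Cmod (psi b - psi 0)%C <= eps * b).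
  { intros b Hb eps Heps.
    set (E := fun s => 0 <= s <= b /\ forall u, 0 <= u <= s -> Cmod (psi u - psi 0)%C <= eps * u).
    assert (HE0 : E 0).
    { split; [lra|]. intros u Hu. replace u with 0 by lra.
      replace (psi 0 - psi 0)%C with (RtoC 0) by ring. rewrite Cmod_0. lra. }
    destruct (completeness E) as [sig [Hub Hlub]].
    { exists b. intros s [Hs _]. lra. }
    { exists 0; auto. }
    assert (Hs0 : 0 <= sig) by (apply Hub; auto).
    assert (Hsb : sig <= b) by (apply Hlub; intros s [Hs _]; lra).
    assert (C1 : forall u, 0 <= u < sig -> Cmod (psi u - psi 0)%C <= eps * u).
    { intros u Hu.
      destruct (classic (exists s, E s /\ u < s)) as [[s [[_ Hs] Hus]]|Hn].
      - apply Hs; lra.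
      - exfalso. assert (sig <= u); [|lra]. apply Hlub. intros s Es.
        apply Rnot_lt_le. intro. apply Hn. exists s; auto. }
    assert (C2 : Cmod (psi sig - psi 0)%C <= eps * sig).
    { destruct (Req_dec sig 0) as [Hz|Hz].
      { rewrite Hz. replace (psi 0 - psi 0)%C with (RtoC 0) by ring. rewrite Cmod_0. lra. }
      apply Rle_plus_epsilon. intros eta Heta.
      destruct (Hc sig Hs0 eta Heta) as [d [Hd0 Hdd]].
      set (u := sig - Rmin (d/2) (sig/2)).
      assert (Hm1 : Rmin (d/2) (sig/2) <= d/2) by apply Rmin_l.
      assert (Hm2 : Rmin (d/2) (sig/2) <= sig/2) by apply Rmin_r.
      assert (Hm3 : 0 < Rmin (d/2) (sig/2)) by (apply Rmin_glb_lt; lra).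
      assert (Hu : 0 <= u < sig) by (unfold u; lra).
      assert (Hud : Rabs (u - sig) < d) by (unfold u; rewrite Rabs_left by lra; lra).
      specialize (Hdd u (proj1 Hu) Hud).
      rewrite <- Cmod_opp in Hdd. replace (- (psi u - psi sig))%C with (psi sig - psi u)%C in Hdd by ring.
      pose proof (C1 u Hu). pose proof (Cmod_tri3 (psi sig) (psi u) (psi 0)).
      assert (eps * u <= eps * sig) by (apply Rmult_le_compat_l; lra).
      lra. }
    assert (ES : E sig).
    { split; [lra|]. intros u Hu. destruct (Req_dec u sig) as [->|Hne]; auto.
      apply C1; lra. }
    assert (C3 : sig = b).
    { destruct (Req_dec sig b) as [|Hne]; auto. exfalso.
      destruct (Hd sig Hs0 eps Heps) as [d [Hd0 Hdd]].
      set (s' := sig + Rmin (d/2) (b - sig)).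
      assert (Hm1 : Rmin (d/2) (b - sig) <= d/2) by apply Rmin_l.
      assert (Hm2 : Rmin (d/2) (b - sig) <= b - sig) by apply Rmin_r.
      assert (Hm3 : 0 < Rmin (d/2) (b - sig)) by (apply Rmin_glb_lt; lra).
      assert (E s').
      { split; [unfold s'; lra|]. intros u Hu.
        destruct (Rle_lt_dec u sig) as [Hle|Hlt].
        - apply (proj2 ES); lra.
        - specialize (Hdd (u - sig) ltac:(unfold s' in Hu; lra)).
          replace (sig + (u - sig)) with u in Hdd by ring.
          pose proof (Cmod_tri3 (psi u) (psi sig) (psi 0)). lra. }
      assert (s' <= sig) by (apply Hub; auto). unfold s' in *. lra. }
    rewrite <- C3. exact C2. }
  intros t Ht. destruct (Req_dec t 0) as [->|Hne]; auto.
  assert (Hz : Cmod (psi t - psi 0)%C <= 0).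
  { apply Rle_plus_epsilon. intros e He. rewrite Rplus_0_l.
    specialize (Main t ltac:(lra) (e / t) ltac:(apply Rdiv_lt_0_compat; lra)).
    replace (e / t * t) with e in Main by (field; lra). exact Main. }
  assert (Cmod (psi t - psi 0)%C = 0) by (pose proof (Cmod_ge_0 (psi t - psi 0)%C); lra).
  apply Cmod_eq_0 in H.
  replace (psi t) with ((psi t - psi 0) + psi 0)%C by ring. rewrite H. ring.
Qed.
Local Open Scope R_scope.

Lemma bridge1 (f : CC -> CC) z l : @is_derive C_AbsRing (AbsRing_NormedModule C_AbsRing) f z l -> @is_derive C_AbsRing C_NormedModule f z l.
Proof. intros [H1 H2]. split.
- destruct H1 as [Ha Hb Hc]. split; [exact Ha|exact Hb|exact Hc].
- intros x Hx. exact (H2 x Hx).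
Qed.
Lemma bridge2 (f : CC -> CC) z l : @is_derive C_AbsRing C_NormedModule f z l -> @is_derive C_AbsRing (AbsRing_NormedModule C_AbsRing) f z l.
Proof. intros [H1 H2]. split.
- destruct H1 as [Ha Hb Hc]. split; [exact Ha|exact Hb|exact Hc].
- intros x Hx. exact (H2 x Hx).
Qed.

Lemma Cex_derive_mult (f g : CC -> CC) (z : CC) :
  @ex_derive C_AbsRing C_NormedModule f z -> @ex_derive C_AbsRing C_NormedModule g z ->
  @ex_derive C_AbsRing C_NormedModule (fun w => (f w * g w)%C) z.
Proof.
  intros [df Hf] [dg Hg]. exists (df * g z + f z * dg)%C.
  apply bridge2 in Hf. apply bridge2 in Hg. apply bridge1.
  exact (is_derive_mult (K:=C_AbsRing) f g z df dg Hf Hg (fun a b => Cmult_comm a b)).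
Qed.

Lemma Cex_derive_plus (f g : CC -> CC) (z : CC) :
  @ex_derive C_AbsRing C_NormedModule f z -> @ex_derive C_AbsRing C_NormedModule g z ->
  @ex_derive C_AbsRing C_NormedModule (fun w => (f w + g w)%C) z.
Proof.
  intros Hf Hg. apply (ex_derive_plus (K:=C_AbsRing) (V:=C_NormedModule) f g z Hf Hg).
Qed.

Lemma Cex_derive_const (c z : CC) : @ex_derive C_AbsRing C_NormedModule (fun _ => c) z.
Proof. apply (ex_derive_const (K:=C_AbsRing) (V:=C_NormedModule)). Qed.

Lemma Cex_derive_id (z : CC) : @ex_derive C_AbsRing C_NormedModule (fun w => w) z.
Proof. exists (RtoC 1). apply bridge1. apply (is_derive_id (K:=C_AbsRing)). Qed.

Lemma ra_add f g : real_analytic f -> real_analytic g -> real_analytic (fadd f g).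
Proof.
  intros [U1 [F1 [[HU1 HR1] [Hh1 He1]]]] [U2 [F2 [[HU2 HR2] [Hh2 He2]]]].
  exists (fun z => U1 z /\ U2 z), (fun z => (F1 z + F2 z)%C).
  split; [split|split].
  - apply open_and; auto.
  - intros x; split; auto.
  - intros z [Hz1 Hz2]. apply Cex_derive_plus; auto.
  - intros x. unfold fadd. rewrite He1, He2. reflexivity.
Qed.

Lemma ra_scal c f : real_analytic f -> real_analytic (fscal c f).
Proof.
  intros [U [F [[HU HR] [Hh He]]]].
  exists U, (fun z => (c * F z)%C).
  split; [split|split]; auto.
  - intros z Hz. apply Cex_derive_mult; auto. apply Cex_derive_const.
  - intros x. unfold fscal. rewrite He. reflexivity.
Qed.

Lemma fsub_eq f g : fsub f g = fadd f (fscal (RtoC (-1)) g).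
Proof.
  apply functional_extensionality; intro x. unfold fsub, fadd, fscal.
  apply C_ext; simpl; ring.
Qed.

Lemma ra_sub f g : real_analytic f -> real_analytic g -> real_analytic (fsub f g).
Proof. intros. rewrite fsub_eq. apply ra_add; auto. apply ra_scal; auto. Qed.

Section Lin.
Variable T : opA.
Hypothesis HT : cont_linear_opA T.

Lemma T_add f g x : real_analytic f -> real_analytic g -> T (fadd f g) x = (T f x + T g x)%C.
Proof. intros Ha Hb; destruct HT as [_ [Hadd _]]; apply Hadd; auto. Qed.

Lemma T_scal c f x : real_analytic f -> T (fscal c f) x = (c * T f x)%C.
Proof. intros Ha; destruct HT as [_ [_ [Hsc _]]]; apply Hsc; auto. Qed.

Lemma T_sub f g x : real_analytic f -> real_analytic g -> T (fsub f g) x = (T f x - T g x)%C.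
Proof.
  intros. rewrite fsub_eq, T_add, T_scal; auto.
  - apply C_ext; simpl; ring.
  - apply ra_scal; auto.
Qed.

Lemma T_ra f : real_analytic f -> real_analytic (T f).
Proof. intros Ha; destruct HT as [Hra _]; auto. Qed.
End Lin.

Lemma sumC_S (f : nat -> CC) n : @sum_n C_AbelianMonoid f (S n) = (@sum_n C_AbelianMonoid f n + f (S n))%C.
Proof. rewrite sum_Sn. reflexivity. Qed.

Lemma Cdistr_aux (a b c : CC) : (a * c + b * c = (a + b) * c)%C.
Proof. ring. Qed.

Lemma sumC_mult_r (f : nat -> CC) (c : CC) n :
  @sum_n C_AbelianMonoid (fun j => f j * c)%C n = (@sum_n C_AbelianMonoid f n * c)%C.
Proof.
  induction n.
  - rewrite !sum_O. reflexivity.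
  - rewrite !sumC_S, IHn. apply Cdistr_aux.
Qed.

Lemma sumC_ext (f g : nat -> CC) n : (forall j, f j = g j) ->
  @sum_n C_AbelianMonoid f n = @sum_n C_AbelianMonoid g n.
Proof. intros; apply sum_n_ext; auto. Qed.

Definition mono (c : CC) (k : nat) : R -> CC := fun y => (c * RtoC y ^ k)%C.

Lemma Re_mono c k y : Re (mono c k y) = Re c * y ^ k.
Proof. unfold mono. rewrite <- RtoC_pow. destruct c; simpl; ring. Qed.
Lemma Im_mono c k y : Im (mono c k y) = Im c * y ^ k.
Proof. unfold mono. rewrite <- RtoC_pow. destruct c; simpl; ring. Qed.

Lemma Derive_monoR (r : R) k x : Derive (fun y => r * y ^ k) x = r * (INR k * x ^ pred k).
Proof. apply is_derive_unique. auto_derive; auto. ring. Qed.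

Lemma theta_mono c k : theta (mono c k) = mono (c * RtoC (INR k))%C k.
Proof.
  apply functional_extensionality; intro x.
  unfold theta, derivC.
  rewrite (Derive_ext _ (fun y => Re c * y ^ k) x) by (intros; apply Re_mono).
  rewrite (Derive_ext (fun y => Im (mono c k y)) (fun y => Im c * y ^ k) x) by (intros; apply Im_mono).
  rewrite !Derive_monoR.
  assert (E : x * (INR k * x ^ pred k) = INR k * x ^ k).
  { destruct k; simpl; ring. }
  apply C_ext.
  - rewrite Re_mono. simpl. destruct c as [c1 c2]; simpl.
    transitivity (c1 * (x * (INR k * x ^ pred k))); [ring|]. rewrite E. ring.
  - rewrite Im_mono. simpl. destruct c as [c1 c2]; simpl.
    transitivity (c2 * (x * (INR k * x ^ pred k))); [ring|]. rewrite E. ring.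
Qed.

Lemma iter_theta_mono c k j :
  Nat.iter j theta (mono c k) = mono (c * RtoC (INR k) ^ j)%C k.
Proof.
  induction j.
  - simpl. f_equal. ring.
  - simpl Nat.iter. rewrite IHj, theta_mono. f_equal. simpl. ring.
Qed.

Definition Pk (a : nat -> CC) (K k : nat) : CC :=
  @sum_n C_AbelianMonoid (fun j => a j * RtoC (INR k) ^ j)%C K.

Lemma Ptheta_mono a K k : Ptheta a K (mono 1 k) = fscal (Pk a K k) (mono 1 k).
Proof.
  apply functional_extensionality; intro x.
  unfold Ptheta, fscal, Pk.
  rewrite (sumC_ext _ (fun j => (a j * RtoC (INR k) ^ j) * mono 1 k x)%C).
  - apply sumC_mult_r.
  - intros j. rewrite iter_theta_mono. unfold mono. ring.
Qed.

Lemma real_cont_ed (f : R -> R) t0 : ex_derive f t0 ->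
  forall eps, 0 < eps -> exists delta, 0 < delta /\
    forall t, Rabs (t - t0) < delta -> Rabs (f t - f t0) < eps.
Proof.
  intros Hd eps Heps. apply ex_derive_continuous in Hd.
  destruct (proj1 (filterlim_locally f (f t0)) Hd (mkposreal eps Heps)) as [d Hdd].
  exists d. split; [apply cond_pos|]. intros t Ht.
  apply (Hdd t). exact Ht.
Qed.

Lemma cexp_cont (w : CC) t0 : forall eps, 0 < eps -> exists delta, 0 < delta /\
  forall t, Rabs (t - t0) < delta -> Cmod (cexp (RtoC t * w) - cexp (RtoC t0 * w))%C < eps.
Proof.
  intros eps Heps.
  destruct (real_cont_ed (fun t => exp (t * Re w) * cos (t * Im w)) t0) with (eps := eps/2)
    as [d1 [Hd1 H1]]; [auto_derive; auto|lra|].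
  destruct (real_cont_ed (fun t => exp (t * Re w) * sin (t * Im w)) t0) with (eps := eps/2)
    as [d2 [Hd2 H2]]; [auto_derive; auto|lra|].
  exists (Rmin d1 d2). split; [apply Rmin_glb_lt; auto|].
  intros t Ht.
  assert (Ht1 : Rabs (t - t0) < d1) by (eapply Rlt_le_trans; [apply Ht|apply Rmin_l]).
  assert (Ht2 : Rabs (t - t0) < d2) by (eapply Rlt_le_trans; [apply Ht|apply Rmin_r]).
  specialize (H1 t Ht1). specialize (H2 t Ht2).
  eapply Rle_lt_trans; [apply Cmod_le_sum|].
  unfold cexp. simpl Re. simpl Im.
  repeat rewrite Rmult_0_l. repeat rewrite Rminus_0_r. repeat rewrite Rplus_0_r.
  unfold Re, Im in *. unfold Rminus in *. lra.
Qed.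

Lemma Cmod_mul_le (a b : CC) (A B : R) : Cmod a <= A -> Cmod b <= B -> Cmod (a * b)%C <= A * B.
Proof.
  intros. rewrite Cmod_mult. apply Rmult_le_compat; auto; apply Cmod_ge_0.
Qed.

Lemma prod_cont (E phi : R -> CC) (D : R -> Prop) t0 :
  (forall eps, 0 < eps -> exists delta, 0 < delta /\ forall t, Rabs (t - t0) < delta -> Cmod (E t - E t0)%C < eps) ->
  (forall eps, 0 < eps -> exists delta, 0 < delta /\ forall t, D t -> Rabs (t - t0) < delta -> Cmod (phi t - phi t0)%C < eps) ->
  forall eps, 0 < eps -> exists delta, 0 < delta /\ forall t, D t -> Rabs (t - t0) < delta -> Cmod (E t * phi t - E t0 * phi t0)%C < eps.
Proof.
  intros HE Hp eps Heps.
  set (A := Cmod (E t0) + 1). set (B := Cmod (phi t0) + 1).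
  assert (HA : 0 < A) by (unfold A; pose proof (Cmod_ge_0 (E t0)); lra).
  assert (HB : 0 < B) by (unfold B; pose proof (Cmod_ge_0 (phi t0)); lra).
  destruct (HE (Rmin 1 (eps / (3 * B)))) as [d1 [Hd1 H1]].
  { apply Rmin_glb_lt; [lra|]. apply Rdiv_lt_0_compat; lra. }
  destruct (Hp (eps / (3 * A))) as [d2 [Hd2 H2]]. { apply Rdiv_lt_0_compat; lra. }
  exists (Rmin d1 d2). split; [apply Rmin_glb_lt; auto|].
  intros t Dt Ht.
  assert (Ht1 : Rabs (t - t0) < d1) by (eapply Rlt_le_trans; [apply Ht|apply Rmin_l]).
  assert (Ht2 : Rabs (t - t0) < d2) by (eapply Rlt_le_trans; [apply Ht|apply Rmin_r]).
  specialize (H1 t Ht1). specialize (H2 t Dt Ht2).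
  assert (Hm1 : Rmin 1 (eps / (3 * B)) <= 1) by apply Rmin_l.
  assert (Hm2 : Rmin 1 (eps / (3 * B)) <= eps / (3 * B)) by apply Rmin_r.
  replace (E t * phi t - E t0 * phi t0)%C with (E t * (phi t - phi t0) + (E t - E t0) * phi t0)%C by ring.
  eapply Rle_lt_trans; [apply Cmod_triangle|].
  assert (HEt : Cmod (E t) <= A).
  { unfold A. replace (E t) with ((E t - E t0) + E t0)%C by ring.
    eapply Rle_trans; [apply Cmod_triangle|]. lra. }
  pose proof (Cmod_mul_le (E t) (phi t - phi t0)%C A (eps / (3 * A)) HEt ltac:(lra)).
  pose proof (Cmod_mul_le (E t - E t0)%C (phi t0) (eps / (3 * B)) B ltac:(lra) ltac:(unfold B; lra)).
  replace (A * (eps / (3 * A))) with (eps/3) in H by (field; lra).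
  replace (eps / (3 * B) * B) with (eps/3) in H0 by (field; lra).
  lra.
Qed.

Lemma ra_mono c k : real_analytic (mono c k).
Proof.
  exists (fun _ => True), (fun z => (c * z ^ k)%C).
  split; [split|split].
  - apply open_true.
  - auto.
  - intros z _. apply Cex_derive_mult; [apply Cex_derive_const|].
    induction k.
    + apply (ex_derive_ext (fun _ => RtoC 1)); [intros; reflexivity|]. apply Cex_derive_const.
    + apply (ex_derive_ext (fun w => (w * w ^ k)%C)); [intros; reflexivity|].
      apply Cex_derive_mult; auto. apply Cex_derive_id.
  - intros x. reflexivity.
Qed.

Lemma eval_cont x0 : cont_seminormA (fun f => Cmod (f x0)).
Proof.
  split; [split|].
  - intros f g _ _. unfold fadd. apply Cmod_triangle.
  - intros c f _. unfold fscal. apply Cmod_mult.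
  - intros U [HU HR]. exists (fun z => z = RtoC x0), 1.
    split; [|split; [|split]].
    + intros I O HO Hcov. destruct (Hcov (RtoC x0) eq_refl) as [i Hi].
      exists (i :: nil). intros z ->. exists i. split; [left; auto|auto].
    + intros z ->. auto.
    + lra.
    + intros F _ s Hs. rewrite Rmult_1_l. apply Hs. reflexivity.
Qed.

Lemma comp_cont (T : opA) q : cont_linear_opA T -> cont_seminormA q -> cont_seminormA (fun f => q (T f)).
Proof. intros [_ [_ [_ H]]] Hq. apply H; auto. Qed.

Section Semi.
Variable T : R -> opA.
Variable a : nat -> CC.
Variable K : nat.
Hypothesis HC : C0_semigroup T.
Hypothesis HG : generates (Ptheta a K) T.

Lemma T_lin t : 0 <= t -> cont_linear_opA (T t).
Proof. intros Ht; destruct HC as [Hl _]; auto. Qed.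

Lemma phi_deriv k x0 t : 0 <= t -> forall eps, 0 < eps -> exists delta, 0 < delta /\
  forall h, 0 < h < delta ->
   Cmod (RtoC (/h) * (T (t + h) (mono 1 k) x0 - T t (mono 1 k) x0) - Pk a K k * T t (mono 1 k) x0)%C < eps.
Proof.
  intros Ht eps Heps.
  set (g := mono 1 k).
  pose proof (comp_cont (T t) (fun f => Cmod (f x0)) (T_lin t Ht) (eval_cont x0)) as Hq.
  destruct (HG g (ra_mono 1 k) _ Hq eps Heps) as [d [Hd H]].
  exists d. split; auto. intros h [Hh1 Hh2]. specialize (H h Hh1 Hh2).
  simpl in H.
  assert (Hg : real_analytic g) by apply ra_mono.
  assert (HTh : real_analytic (T h g)) by (apply (T_ra (T h)); [apply T_lin; lra|auto]).
  unfold g in H. rewrite Ptheta_mono in H. fold g in H.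
  rewrite (T_sub (T t) (T_lin t Ht)) in H.
  2:{ apply ra_scal, ra_sub; auto. }
  2:{ apply ra_scal; auto. }
  rewrite (T_scal (T t) (T_lin t Ht)) in H by (apply ra_sub; auto).
  rewrite (T_scal (T t) (T_lin t Ht)) in H by auto.
  rewrite (T_sub (T t) (T_lin t Ht)) in H by auto.
  destruct HC as [_ [Hsg _]].
  rewrite (Hsg t h Ht ltac:(lra) g Hg x0) in H.
  exact H.
Qed.

Lemma phi_cont k x0 t0 : 0 <= t0 -> forall eps, 0 < eps -> exists delta, 0 < delta /\
  forall t, 0 <= t -> Rabs (t - t0) < delta ->
   Cmod (T t (mono 1 k) x0 - T t0 (mono 1 k) x0)%C < eps.
Proof.
  intros Ht0 eps Heps.
  destruct HC as [_ [_ [_ Hc]]].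
  destruct (Hc (mono 1 k) (ra_mono 1 k) t0 Ht0 _ (eval_cont x0) eps Heps) as [d [Hd H]].
  exists d. split; auto.
Qed.

Lemma T_mono k x0 t : 0 <= t -> T t (mono 1 k) x0 = (cexp (RtoC t * Pk a K k) * mono 1 k x0)%C.
Proof.
  intros Ht.
  set (P := Pk a K k).
  set (phi := fun s => T s (mono 1 k) x0).
  set (w := (- P)%C).
  set (E := fun s => cexp (RtoC s * w)%C).
  set (psi := fun s => (E s * phi s)%C).
  assert (Hpsi : forall s, 0 <= s -> psi s = psi 0).
  { apply rderiv0_const.
    - intros t0 Ht0. apply (prod_cont E phi (fun s => 0 <= s) t0).
      + apply cexp_cont.
      + apply phi_cont; auto.
    - intros s Hs eps Heps.
      set (Et := E s). set (f0 := phi s).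
      set (tau := eps / (Cmod Et + 1)).
      assert (HEt0 := Cmod_ge_0 Et). assert (Hf00 := Cmod_ge_0 f0).
      assert (HP0 := Cmod_ge_0 P). assert (HPf0 := Cmod_ge_0 (P * f0)%C).
      assert (Htau : 0 < tau) by (unfold tau; apply Rdiv_lt_0_compat; lra).
      set (eta := Rmin 1 (tau / (2 * (1 + Cmod f0)))).
      assert (Heta1 : eta <= 1) by apply Rmin_l.
      assert (Heta2 : eta <= tau / (2 * (1 + Cmod f0))) by apply Rmin_r.
      assert (Heta : 0 < eta) by (apply Rmin_glb_lt; [lra|apply Rdiv_lt_0_compat; lra]).
      destruct (phi_deriv k x0 s Hs eta Heta) as [d1 [Hd1 H1]].
      destruct (cexp_rderiv0 w eta Heta) as [d2 [Hd2 H2]].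
      set (d3 := tau / (2 * (Cmod P + 1) * (Cmod (P * f0)%C + 1))).
      assert (Hd3 : 0 < d3) by (unfold d3; apply Rdiv_lt_0_compat; [lra|]; apply Rmult_lt_0_compat; [apply Rmult_lt_0_compat|]; lra).
      exists (Rmin (Rmin d1 d2) d3). split.
      { apply Rmin_glb_lt; [apply Rmin_glb_lt|]; auto. }
      intros h [Hh1 Hh2].
      assert (Hhd1 : h < d1) by (eapply Rlt_le_trans; [apply Hh2|]; eapply Rle_trans; [apply Rmin_l|apply Rmin_l]).
      assert (Hhd2 : h < d2) by (eapply Rlt_le_trans; [apply Hh2|]; eapply Rle_trans; [apply Rmin_l|apply Rmin_r]).
      assert (Hhd3 : h < d3) by (eapply Rlt_le_trans; [apply Hh2|]; apply Rmin_r).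
      specialize (H1 h (conj Hh1 Hhd1)). specialize (H2 h (conj Hh1 Hhd2)).
      fold P in H1.
      set (X := T (s + h) (mono 1 k) x0) in H1.
      fold phi in H1. change (T s (mono 1 k) x0) with (phi s) in H1. fold f0 in H1.
      set (Eh := cexp (RtoC h * w)%C) in H2.
      set (r1 := (RtoC (/ h) * (X - f0) - P * f0)%C) in H1.
      set (e := (RtoC (/ h) * (Eh - 1))%C) in H2.
      set (r2 := (e - w)%C) in H2.
      assert (Hhh : (RtoC h * RtoC (/ h))%C = RtoC 1).
      { rewrite <- RtoC_mult, Rinv_r; [reflexivity|lra]. }
      assert (HX : X = (f0 + RtoC h * (P * f0 + r1))%C).
      { unfold r1. transitivity (f0 + (RtoC h * RtoC (/ h)) * (X - f0))%C.
        - rewrite Hhh. ring.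
        - ring. }
      assert (HEh : Eh = (1 + RtoC h * (- P + r2))%C).
      { unfold r2, e, w. transitivity (1 + (RtoC h * RtoC (/ h)) * (Eh - 1))%C.
        - rewrite Hhh. ring.
        - ring. }
      assert (Hsh : (psi (s + h)%R - psi s)%C =
                    (RtoC h * (Et * (r1 + RtoC h * (- P + r2) * (P * f0 + r1) + r2 * f0)))%C).
      { unfold psi. change (phi (s + h)%R) with X. fold f0.
        unfold E at 1. rewrite RtoC_plus.
        replace ((RtoC s + RtoC h) * w)%C with (RtoC s * w + RtoC h * w)%C by ring.
        rewrite cexp_add. fold Eh. change (cexp (RtoC s * w)) with (E s). fold Et.
        rewrite HX, HEh. ring. }
      rewrite Hsh, Cmod_mult, Cmod_R, Rabs_right by lra.
      rewrite Rmult_comm. apply Rmult_le_compat_r; [lra|].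
      rewrite Cmod_mult.
      assert (Hr2f : Cmod (r2 * f0)%C <= eta * Cmod f0).
      { rewrite Cmod_mult. apply Rmult_le_compat_r; lra. }
      assert (He : Cmod (- P + r2)%C <= Cmod P + 1).
      { eapply Rle_trans; [apply Cmod_triangle|]. rewrite Cmod_opp. lra. }
      assert (Hpr : Cmod (P * f0 + r1)%C <= Cmod (P * f0)%C + 1).
      { eapply Rle_trans; [apply Cmod_triangle|]. lra. }
      assert (Hmid : Cmod (RtoC h * (- P + r2) * (P * f0 + r1))%C <= d3 * ((Cmod P + 1) * (Cmod (P * f0)%C + 1))).
      { rewrite (Cmod_mult (RtoC h * (- P + r2))%C (P * f0 + r1)%C), (Cmod_mult (RtoC h) (- P + r2)%C), Cmod_R, Rabs_right by lra.
        rewrite Rmult_assoc. apply Rmult_le_compat; try lra.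
        - apply Rmult_le_pos; apply Cmod_ge_0.
        - apply Rmult_le_compat; auto; apply Cmod_ge_0. }
      replace (d3 * ((Cmod P + 1) * (Cmod (P * f0)%C + 1))) with (tau / 2) in Hmid.
      2:{ unfold d3. field. split; lra. }
      assert (Hbr : Cmod (r1 + RtoC h * (- P + r2) * (P * f0 + r1) + r2 * f0)%C <= tau).
      { eapply Rle_trans; [apply Cmod_triangle|].
        eapply Rle_trans; [apply Rplus_le_compat_r; apply Cmod_triangle|].
        assert (eta * (1 + Cmod f0) <= tau / 2).
        { eapply Rle_trans; [apply Rmult_le_compat_r; [lra|apply Heta2]|]. right. field. lra. }
        lra. }
      eapply Rle_trans; [apply Rmult_le_compat_l; [apply Cmod_ge_0|apply Hbr]|].
      unfold tau. replace (Cmod Et * (eps / (Cmod Et + 1))) with (eps * (Cmod Et / (Cmod Et + 1))) by (field; lra).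
      rewrite <- (Rmult_1_r eps) at 2. apply Rmult_le_compat_l; [lra|].
      apply Rmult_le_reg_r with (Cmod Et + 1); [lra|]. field_simplify; lra. }
  specialize (Hpsi t Ht).
  unfold psi, E, phi in Hpsi.
  replace (RtoC 0 * w)%C with (RtoC 0) in Hpsi by ring. rewrite cexp_0 in Hpsi.
  destruct HC as [_ [_ [H0 _]]]. rewrite (H0 _ (ra_mono 1 k) x0) in Hpsi.
  transitivity (cexp (RtoC t * P) * (cexp (RtoC t * w) * T t (mono 1 k) x0))%C.
  - rewrite Cmult_assoc, <- cexp_add. unfold w.
    replace (RtoC t * P + RtoC t * - P)%C with (RtoC 0) by ring. rewrite cexp_0. ring.
  - rewrite Hpsi. ring.
Qed.
End Semi.

Lemma sqrt2_lt_2 : sqrt 2 < 2.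
Proof.
  rewrite <- (sqrt_pow2 2) at 2 by lra. apply sqrt_lt_1_alt. lra.
Qed.

Lemma ball_Cmod (z y : CC) (eps : posreal) : @ball C_UniformSpace z eps y -> Cmod (y - z)%C < 2 * eps.
Proof.
  intros H. pose proof (C_NormedModule_mixin_compat2 z y eps H).
  pose proof sqrt2_lt_2. pose proof (cond_pos eps).
  change (minus y z) with (y - z)%C in H0. nra.
Qed.

Lemma open_disc (r : R) : @open C_UniformSpace (fun z => Cmod z < r).
Proof.
  intros z Hz. assert (He : 0 < (r - Cmod z) / 2) by lra.
  exists (mkposreal _ He). intros y Hy. apply ball_Cmod in Hy. simpl in Hy.
  replace y with (z + (y - z))%C by ring.
  eapply Rle_lt_trans; [apply Cmod_triangle|]. lra.
Qed.

Lemma im_le_Cmod' (c : CC) : Rabs (Im c) <= Cmod c.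
Proof.
  unfold Cmod. rewrite <- sqrt_Rsqr_abs. apply sqrt_le_1_alt.
  unfold Rsqr, Im. simpl. pose proof (pow2_ge_0 (fst c)). nra.
Qed.

Lemma open_strip (e : R) : @open C_UniformSpace (fun z => Rabs (Im z) < e).
Proof.
  intros z Hz. assert (He : 0 < (e - Rabs (Im z)) / 2) by lra.
  exists (mkposreal _ He). intros y Hy. apply ball_Cmod in Hy. simpl in Hy.
  pose proof (im_le_Cmod' (y - z)%C).
  replace (Im (y - z)%C) with (Im y - Im z) in H by (simpl; unfold Im; ring).
  pose proof (Rabs_triang_inv (Im y) (Im z)). lra.
Qed.

Lemma nbhdR_strip e : 0 < e -> nbhdR (fun z => Rabs (Im z) < e).
Proof.
  intros He. split; [apply open_strip|]. intros x. simpl. rewrite Rabs_R0. auto.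
Qed.

Lemma nbhdR_full : nbhdR (fun _ => True).
Proof. split; [apply open_true|auto]. Qed.

Lemma fold_Rmax_ge (l : list R) r : In r l -> r <= fold_right Rmax 0 l.
Proof.
  induction l; simpl; [tauto|]. intros [->|H].
  - apply Rmax_l.
  - eapply Rle_trans; [apply IHl; auto|apply Rmax_r].
Qed.

Lemma fold_Rmax_pos (l : list R) : 0 <= fold_right Rmax 0 l.
Proof. induction l; simpl; [lra|]. eapply Rle_trans; [apply IHl|apply Rmax_r]. Qed.

Lemma compact_bounded (Kc : CC -> Prop) : compactC Kc -> exists R0, 1 <= R0 /\ forall z, Kc z -> Cmod z <= R0.
Proof.
  intros HK. destruct (HK R (fun r z => Cmod z < r)) as [l Hl].
  - intros r. apply open_disc.
  - intros z _. exists (Cmod z + 1). lra.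
  - exists (Rmax 1 (fold_right Rmax 0 l)). split; [apply Rmax_l|].
    intros z Hz. destruct (Hl z Hz) as [r [Hr Hzr]].
    pose proof (fold_Rmax_ge l r Hr).
    eapply Rle_trans; [|apply Rmax_r]. lra.
Qed.

Lemma sumR_S (f : nat -> R) n : @sum_n R_AbelianMonoid f (S n) = @sum_n R_AbelianMonoid f n + f (S n).
Proof. rewrite sum_Sn. reflexivity. Qed.

Lemma sumR_ext (f g : nat -> R) n : (forall j, f j = g j) ->
  @sum_n R_AbelianMonoid f n = @sum_n R_AbelianMonoid g n.
Proof. intros; apply sum_n_ext; auto. Qed.

Lemma Re_sumC (f : nat -> CC) n : Re (@sum_n C_AbelianMonoid f n) = @sum_n R_AbelianMonoid (fun j => Re (f j)) n.
Proof.
  induction n.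
  - rewrite !sum_O. reflexivity.
  - rewrite sumC_S, sumR_S, <- IHn. reflexivity.
Qed.

Lemma Im_sumC (f : nat -> CC) n : Im (@sum_n C_AbelianMonoid f n) = @sum_n R_AbelianMonoid (fun j => Im (f j)) n.
Proof.
  induction n.
  - rewrite !sum_O. reflexivity.
  - rewrite sumC_S, sumR_S, <- IHn. reflexivity.
Qed.

Lemma sumR_trunc (f : nat -> R) l d : (forall j, (l < j)%nat -> (j <= l + d)%nat -> f j = 0) ->
  @sum_n R_AbelianMonoid f (l + d) = @sum_n R_AbelianMonoid f l.
Proof.
  induction d; intros H.
  - rewrite Nat.add_0_r. reflexivity.
  - rewrite Nat.add_succ_r, sumR_S, IHd.
    + rewrite H by lia. apply Rplus_0_r.
    + intros; apply H; lia.
Qed.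

Lemma sum_abs_nonneg (c : nat -> R) m : 0 <= @sum_n R_AbelianMonoid (fun j => Rabs (c j)) m.
Proof.
  induction m.
  - rewrite sum_O. apply Rabs_pos.
  - rewrite sumR_S. pose proof (Rabs_pos (c (S m))).
    apply Rplus_le_le_0_compat; auto.
Qed.

Lemma poly_bound (c : nat -> R) m y : 1 <= y ->
  Rabs (@sum_n R_AbelianMonoid (fun j => c j * y ^ j) m) <=
  @sum_n R_AbelianMonoid (fun j => Rabs (c j)) m * y ^ m.
Proof.
  intros Hy. induction m.
  - rewrite !sum_O. simpl. rewrite Rmult_1_r, Rmult_1_r. lra.
  - rewrite !sumR_S.
    assert (Hm : y ^ m <= y ^ S m) by (simpl; pose proof (pow_le y m ltac:(lra)); nra).
    assert (HA : 0 <= @sum_n R_AbelianMonoid (fun j => Rabs (c j)) m) by apply sum_abs_nonneg.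
    eapply Rle_trans; [apply Rabs_triang|].
    rewrite Rabs_mult, (Rabs_right (y ^ S m)) by (apply Rle_ge, pow_le; lra).
    assert (@sum_n R_AbelianMonoid (fun j => Rabs (c j)) m * y ^ m <= @sum_n R_AbelianMonoid (fun j => Rabs (c j)) m * y ^ S m)
      by (apply Rmult_le_compat_l; auto).
    lra.
Qed.

Lemma poly_growth (c : nat -> R) m A B : (1 <= m)%nat -> 0 < c (S m) ->
  exists Y, 1 <= Y /\ forall y, Y <= y -> A + B * y < @sum_n R_AbelianMonoid (fun j => c j * y ^ j) (S m).
Proof.
  intros Hm Hc.
  set (A' := @sum_n R_AbelianMonoid (fun j => Rabs (c j)) m).
  set (Z := A' + Rabs A + Rabs B).
  exists (Rmax 1 ((Z + 1) / c (S m))). split; [apply Rmax_l|].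
  intros y Hy.
  assert (Hy1 : 1 <= y) by (eapply Rle_trans; [apply Rmax_l|apply Hy]).
  assert (Hy2 : (Z + 1) / c (S m) <= y) by (eapply Rle_trans; [apply Rmax_r|apply Hy]).
  assert (Hcy : Z + 1 <= c (S m) * y).
  { apply (Rmult_le_compat_r (c (S m))) in Hy2; [|lra].
    replace ((Z + 1) / c (S m) * c (S m)) with (Z + 1) in Hy2 by (field; lra). lra. }
  rewrite sumR_S.
  pose proof (poly_bound c m y Hy1) as Hb. fold A' in Hb.
  assert (Hym : 1 <= y ^ m) by (apply pow_R1_Rle; lra).
  assert (Hyy : y <= y ^ m).
  { destruct m; [lia|]. simpl. pose proof (pow_R1_Rle y m Hy1). nra. }
  assert (HAB : A + B * y <= (Rabs A + Rabs B) * y ^ m).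
  { pose proof (Rabs_pos A). pose proof (Rabs_pos B).
    assert (A <= Rabs A) by apply Rle_abs.
    assert (B * y <= Rabs B * y) by (apply Rmult_le_compat_r; [lra|apply Rle_abs]). nra. }
  assert (HA'0 : 0 <= A') by apply sum_abs_nonneg.
  assert (Hlow : - (A' * y ^ m) <= @sum_n R_AbelianMonoid (fun j => c j * y ^ j) m).
  { pose proof (Rle_abs (- @sum_n R_AbelianMonoid (fun j => c j * y ^ j) m)). rewrite Rabs_Ropp in H.
    pose proof (Rabs_pos (@sum_n R_AbelianMonoid (fun j => c j * y ^ j) m)). 
    pose proof (Rle_abs (@sum_n R_AbelianMonoid (fun j => c j * y ^ j) m)).
    pose proof (poly_bound c m y Hy1). fold A' in H2. lra. }
  simpl (y ^ S m).
  assert (Z * y ^ m < c (S m) * y * y ^ m) by (apply Rmult_lt_compat_r; lra).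
  unfold Z in H. lra.
Qed.

Lemma Cex_derive_pow k z : @ex_derive C_AbsRing C_NormedModule (fun w => (w ^ k)%C) z.
Proof.
  induction k.
  + apply (ex_derive_ext (fun _ => RtoC 1)); [intros; reflexivity|]. apply Cex_derive_const.
  + apply (ex_derive_ext (fun w => (w * w ^ k)%C)); [intros; reflexivity|].
    apply Cex_derive_mult; auto. apply Cex_derive_id.
Qed.

Lemma Re_Pk a K k : Re (Pk a K k) = @sum_n R_AbelianMonoid (fun j => Re (a j) * INR k ^ j) K.
Proof.
  unfold Pk. rewrite Re_sumC. apply sumR_ext. intros j.
  rewrite <- RtoC_pow, re_scal_r. reflexivity.
Qed.

Lemma mono1_eq k : (fun x => (RtoC x ^ k)%C) = mono 1 k.
Proof. apply functional_extensionality; intro x. unfold mono. ring. Qed.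

Lemma case1 (T : R -> opA) a K : C0_semigroup T -> generates (Ptheta a K) T ->
  forall l, (2 <= l <= K)%nat -> (forall j, (l < j <= K)%nat -> Re (a j) = 0) -> 0 < Re (a l) -> False.
Proof.
  intros HC HG l Hl Hz Hpos.
  pose proof (comp_cont (T 1) _ (T_lin T HC 1 ltac:(lra)) (eval_cont 1)) as Hq.
  destruct (proj2 Hq (fun _ => True) nbhdR_full) as [Kc [M [HKc [_ [HM Hbound]]]]].
  destruct (compact_bounded Kc HKc) as [R0 [HR0 HKR]].
  assert (Key : forall k, exp (Re (Pk a K k)) <= M * R0 ^ k).
  { intros k.
    specialize (Hbound (fun z => (z ^ k)%C) (fun z _ => Cex_derive_pow k z) (R0 ^ k)).
    simpl in Hbound. rewrite mono1_eq in Hbound.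
    rewrite (T_mono T a K HC HG k 1 1 ltac:(lra)) in Hbound.
    rewrite Cmod_mult, Cmod_cexp in Hbound. unfold mono in Hbound.
    rewrite Cmult_1_l, <- RtoC_pow, pow1, Cmult_1_l, Cmod_1, Rmult_1_r in Hbound.
    apply Hbound. intros z Hzz. rewrite Cmod_pow. apply pow_incr. split; [apply Cmod_ge_0|auto]. }
  destruct l as [|m]; [lia|].
  destruct (poly_growth (fun j => Re (a j)) m (ln (M + 1)) (ln R0) ltac:(lia) Hpos) as [Y [HY1 HY]].
  destruct (INR_archimed 1 Y ltac:(lra)) as [k Hk].
  specialize (HY (INR k) ltac:(lra)).
  specialize (Key k). rewrite Re_Pk in Key.
  replace K with (S m + (K - S m))%nat in Key by lia.
  rewrite sumR_trunc in Key.
  2:{ intros j Hj1 Hj2. rewrite Hz by lia. apply Rmult_0_l. }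
  apply exp_increasing in HY.
  rewrite exp_plus, exp_ln in HY by lra.
  replace (exp (ln R0 * INR k)) with (R0 ^ k) in HY.
  2:{ rewrite Rmult_comm, <- ln_pow by lra. rewrite exp_ln; auto. apply pow_lt; lra. }
  pose proof (pow_lt R0 k ltac:(lra)). nra.
Qed.

Lemma C0l (x : CC) : (RtoC 0 + x = x)%C. Proof. ring. Qed.
Lemma C0r (x : CC) : (x + RtoC 0 = x)%C. Proof. ring. Qed.

Lemma sumC_mult_l (f : nat -> CC) (c : CC) n :
  @sum_n C_AbelianMonoid (fun j => c * f j)%C n = (c * @sum_n C_AbelianMonoid f n)%C.
Proof.
  rewrite (sumC_ext _ (fun j => f j * c)%C) by (intros; apply Cmult_comm).
  rewrite sumC_mult_r. apply Cmult_comm.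
Qed.

Lemma Cplus_aux4 (a b c d : CC) : ((a + c) + (b + d) = (a + b) + (c + d))%C.
Proof. ring. Qed.

Lemma sumC_plus (f g : nat -> CC) n :
  @sum_n C_AbelianMonoid (fun j => f j + g j)%C n = (@sum_n C_AbelianMonoid f n + @sum_n C_AbelianMonoid g n)%C.
Proof.
  induction n.
  - rewrite !sum_O. reflexivity.
  - rewrite !sumC_S, IHn. apply Cplus_aux4.
Qed.

Lemma sumC_zero (n : nat) : @sum_n C_AbelianMonoid (fun _ => RtoC 0) n = RtoC 0.
Proof.
  induction n.
  - rewrite sum_O. reflexivity.
  - rewrite sumC_S, IHn. apply C0r.
Qed.

Lemma sumC_ext_loc (f g : nat -> CC) n : (forall j, (j <= n)%nat -> f j = g j) ->
  @sum_n C_AbelianMonoid f n = @sum_n C_AbelianMonoid g n.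
Proof. intros; apply sum_n_ext_loc; auto. Qed.

Lemma sumC_single (f : nat -> CC) (p n : nat) : (p <= n)%nat ->
  (forall j, (j <= n)%nat -> j <> p -> f j = RtoC 0) ->
  @sum_n C_AbelianMonoid f n = f p.
Proof.
  induction n; intros Hp Hz.
  - rewrite sum_O. f_equal. lia.
  - rewrite sumC_S. destruct (Nat.eq_dec p (S n)) as [->|Hne].
    + rewrite (sumC_ext_loc _ (fun _ => RtoC 0)).
      * rewrite sumC_zero. apply C0l.
      * intros j Hj. apply Hz; lia.
    + rewrite IHn by (try lia; intros; apply Hz; lia).
      rewrite (Hz (S n)) by lia. apply C0r.
Qed.

Lemma geom_sum (w : CC) n : ((w - 1) * @sum_n C_AbelianMonoid (fun j => w ^ j)%C n = w ^ (S n) - 1)%C.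
Proof.
  induction n.
  - rewrite sum_O. simpl. ring.
  - rewrite sumC_S.
    transitivity ((w - 1) * @sum_n C_AbelianMonoid (fun j => w ^ j)%C n + (w - 1) * w ^ (S n))%C; [ring|].
    rewrite IHn. simpl. ring.
Qed.

Lemma geom_sum0 (w : CC) n : w <> RtoC 1 -> (w ^ (S n) = RtoC 1)%C ->
  @sum_n C_AbelianMonoid (fun j => w ^ j)%C n = RtoC 0.
Proof.
  intros Hw Hn. pose proof (geom_sum w n) as H. rewrite Hn in H.
  assert (Hw1 : (w - 1)%C <> RtoC 0).
  { intro E. apply Hw. replace w with ((w - 1) + 1)%C by ring. rewrite E. apply C_ext; simpl; ring. }
  replace (RtoC 1 - 1)%C with (RtoC 0) in H by (apply C_ext; simpl; ring).
  assert (Gen : forall S : CC, ((w - 1) * S)%C = RtoC 0 -> S = RtoC 0).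
  { intros S HS. transitivity (/ (w - 1) * ((w - 1) * S))%C.
    - field. auto.
    - rewrite HS. ring. }
  apply Gen. exact H.
Qed.

Lemma geom_sum1 (n : nat) : @sum_n C_AbelianMonoid (fun j => RtoC 1 ^ j)%C n = RtoC (INR (S n)).
Proof.
  induction n.
  - rewrite sum_O. simpl. reflexivity.
  - rewrite sumC_S, IHn, Cpow_1_l. rewrite (S_INR (S n)), RtoC_plus. reflexivity.
Qed.

Lemma sumC_switch (u : nat -> nat -> CC) m n :
  @sum_n C_AbelianMonoid (fun i => @sum_n C_AbelianMonoid (u i) n) m =
  @sum_n C_AbelianMonoid (fun j => @sum_n C_AbelianMonoid (fun i => u i j) m) n.
Proof. apply sum_n_switch. Qed.

Fixpoint prodC (f : nat -> CC) (n : nat) : CC :=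
  match n with
  | O => f O
  | S n' => (prodC f n' * f n)%C
  end.

Lemma prodC_zero (f : nat -> CC) n p : (p <= n)%nat -> f p = RtoC 0 -> prodC f n = RtoC 0.
Proof.
  induction n; intros Hp Hf; simpl.
  - replace p with O in Hf by lia. auto.
  - destruct (Nat.eq_dec p (S n)) as [->|Hne].
    + rewrite Hf. ring.
    + rewrite IHn; [ring|lia|auto].
Qed.

Lemma prodC_nz (f : nat -> CC) n : (forall j, (j <= n)%nat -> f j <> RtoC 0) -> prodC f n <> RtoC 0.
Proof.
  induction n; intros H; simpl.
  - apply H; lia.
  - intro E.
    assert (Cmod (prodC f n * f (S n))%C <> 0).
    { rewrite Cmod_mult. apply Rmult_integral_contrapositive. split.
      - intro E2. apply Cmod_eq_0 in E2. apply IHn in E2; auto.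
      - intro E2. apply Cmod_eq_0 in E2. apply (H (S n)); auto. }
    apply H0. rewrite E. apply Cmod_0.
Qed.

Fixpoint prodR (f : nat -> R) (n : nat) : R :=
  match n with
  | O => f O
  | S n' => prodR f n' * f n
  end.

Lemma prodC_bound (f : nat -> CC) (B : nat -> R) n :
  (forall j, (j <= n)%nat -> Cmod (f j) <= B j) -> Cmod (prodC f n) <= prodR B n.
Proof.
  induction n; intros H; simpl.
  - apply H; lia.
  - rewrite Cmod_mult. apply Rmult_le_compat; try apply Cmod_ge_0.
    + apply IHn. intros; apply H; lia.
    + apply H; lia.
Qed.

Fixpoint evalS (s : nat) (l : list CC) (z : CC) : CC :=
  match l with
  | nil => RtoC 0
  | c :: l' => (c * z ^ s + evalS (S s) l' z)%C
  end.

Lemma evalS_shift s l z : evalS s l z = (z ^ s * evalS 0 l z)%C.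
Proof.
  revert s; induction l as [|c l IH]; intros s; simpl.
  - ring.
  - rewrite IH, (IH 1%nat). simpl. ring.
Qed.

Fixpoint padd (l1 l2 : list CC) : list CC :=
  match l1, l2 with
  | nil, _ => l2
  | _, nil => l1
  | a :: l1', b :: l2' => (a + b)%C :: padd l1' l2'
  end.

Lemma evalS_padd s l1 l2 z : evalS s (padd l1 l2) z = (evalS s l1 z + evalS s l2 z)%C.
Proof.
  revert s l2; induction l1 as [|c l1 IH]; intros s l2; simpl.
  - ring.
  - destruct l2 as [|d l2]; simpl.
    + ring.
    + rewrite IH. ring.
Qed.

Definition pscale (c : CC) (l : list CC) : list CC := map (fun x => (c * x)%C) l.

Lemma evalS_pscale s c l z : evalS s (pscale c l) z = (c * evalS s l z)%C.
Proof.
  revert s; induction l as [|d l IH]; intros s; simpl.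
  - ring.
  - rewrite IH. ring.
Qed.

Fixpoint pmul (l1 l2 : list CC) : list CC :=
  match l1 with
  | nil => nil
  | c :: l1' => padd (pscale c l2) (RtoC 0 :: pmul l1' l2)
  end.

Lemma evalS_pmul l1 l2 z : evalS 0 (pmul l1 l2) z = (evalS 0 l1 z * evalS 0 l2 z)%C.
Proof.
  induction l1 as [|c l1 IH]; simpl.
  - ring.
  - rewrite evalS_padd, evalS_pscale. simpl. rewrite (evalS_shift 1 (pmul l1 l2)), IH.
    rewrite (evalS_shift 1 l1). simpl. ring.
Qed.

Definition ispoly (f : CC -> CC) : Prop := exists l, forall z, f z = evalS 0 l z.

Lemma ispoly_mul f g : ispoly f -> ispoly g -> ispoly (fun z => (f z * g z)%C).
Proof.
  intros [l1 H1] [l2 H2]. exists (pmul l1 l2). intros z. rewrite evalS_pmul, H1, H2. reflexivity.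
Qed.

Lemma ispoly_const c : ispoly (fun _ => c).
Proof. exists (c :: nil). intros z. simpl. ring. Qed.

Lemma ispoly_lin w : ispoly (fun z => (z - w)%C).
Proof. exists ((- w)%C :: RtoC 1 :: nil). intros z. simpl. ring. Qed.

Lemma ispoly_prodC (F : nat -> CC -> CC) n : (forall j, ispoly (F j)) -> ispoly (fun z => prodC (fun j => F j z) n).
Proof.
  intros H. induction n; simpl.
  - apply H.
  - apply (ispoly_mul (fun z => prodC (fun j => F j z) n) (F (S n))); auto.
Qed.

Lemma ispoly_pow f n : ispoly f -> ispoly (fun z => (f z ^ n)%C).
Proof.
  intros H. induction n; simpl.
  - apply ispoly_const.
  - apply (ispoly_mul f (fun z => (f z ^ n)%C)); auto.
Qed.

Lemma holo_evalS s l z : @ex_derive C_AbsRing C_NormedModule (evalS s l) z.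
Proof.
  revert s; induction l as [|c l IH]; intros s; simpl.
  - apply Cex_derive_const.
  - apply (ex_derive_ext (fun w => (c * w ^ s + evalS (S s) l w)%C)); [intros; reflexivity|].
    apply Cex_derive_plus; auto. apply Cex_derive_mult; [apply Cex_derive_const|apply Cex_derive_pow].
Qed.

Lemma ra_evalS s l : real_analytic (fun y => evalS s l (RtoC y)).
Proof.
  exists (fun _ => True), (evalS s l). split; [apply nbhdR_full|split; auto].
  intros z _. apply holo_evalS.
Qed.

Section TPoly.
Variable T : R -> opA.
Variable a : nat -> CC.
Variable K : nat.
Hypothesis HC : C0_semigroup T.
Hypothesis HG : generates (Ptheta a K) T.
Variable t : R.
Hypothesis Ht : 0 <= t.
Variable x0 : R.

Fixpoint TS (s : nat) (l : list CC) : CC :=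
  match l with
  | nil => RtoC 0
  | c :: l' => (c * (cexp (RtoC t * Pk a K s) * RtoC x0 ^ s) + TS (S s) l')%C
  end.

Lemma T_evalS s l : T t (fun y => evalS s l (RtoC y)) x0 = TS s l.
Proof.
  pose proof (T_lin T HC t Ht) as HL.
  revert s; induction l as [|c l IH]; intros s; simpl.
  - replace (fun _ : R => RtoC 0) with (fscal (RtoC 0) (mono 1 0)).
    2:{ apply functional_extensionality; intro y. unfold fscal. ring. }
    rewrite (T_scal (T t) HL) by apply ra_mono. ring.
  - replace (fun y : R => (c * RtoC y ^ s + evalS (S s) l (RtoC y))%C)
      with (fadd (fscal c (mono 1 s)) (fun y => evalS (S s) l (RtoC y))).
    2:{ apply functional_extensionality; intro y. unfold fadd, fscal, mono. ring. }
    rewrite (T_add (T t) HL) by (try apply ra_scal; try apply ra_mono; apply ra_evalS).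
    rewrite (T_scal (T t) HL) by apply ra_mono.
    rewrite IH, (T_mono T a K HC HG s x0 t Ht). unfold mono. ring.
Qed.
End TPoly.

Ltac Cring := match goal with |- @eq _ ?x ?y => change (@eq CC x y); ring end.
Ltac Rring := match goal with |- @eq _ ?x ?y => change (@eq R x y); ring end.

Lemma sumR_ext_loc (f g : nat -> R) n : (forall j, (j <= n)%nat -> f j = g j) ->
  @sum_n R_AbelianMonoid f n = @sum_n R_AbelianMonoid g n.
Proof. intros; apply sum_n_ext_loc; auto. Qed.

Lemma sumR_mult_l (f : nat -> R) c n : @sum_n R_AbelianMonoid (fun j => c * f j) n = c * @sum_n R_AbelianMonoid f n.
Proof.
  induction n.
  - rewrite !sum_O. reflexivity.
  - rewrite !sumR_S, IHn. Rring.
Qed.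

Lemma sumR_minus (f g : nat -> R) n : @sum_n R_AbelianMonoid (fun j => f j - g j) n =
  @sum_n R_AbelianMonoid f n - @sum_n R_AbelianMonoid g n.
Proof.
  induction n.
  - rewrite !sum_O. reflexivity.
  - rewrite !sumR_S, IHn. Rring.
Qed.

Lemma sumR_zero n : @sum_n R_AbelianMonoid (fun _ => 0) n = 0.
Proof.
  induction n.
  - rewrite sum_O. reflexivity.
  - rewrite sumR_S, IHn. Rring.
Qed.

Lemma sumR_int (f : nat -> R) n : (forall j, exists m : Z, f j = IZR m) ->
  exists m : Z, @sum_n R_AbelianMonoid f n = IZR m.
Proof.
  intros H. induction n.
  - rewrite sum_O. apply H.
  - rewrite sumR_S. destruct IHn as [m1 H1]. destruct (H (S n)) as [m2 H2].
    exists (m1 + m2)%Z. rewrite H1, H2, plus_IZR. reflexivity.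
Qed.

Lemma sumR_mulN (f : nat -> R) (N : R) n : (forall j, exists m : Z, f j = N * IZR m) ->
  exists m : Z, @sum_n R_AbelianMonoid f n = N * IZR m.
Proof.
  intros H. induction n.
  - rewrite sum_O. apply H.
  - rewrite sumR_S. destruct IHn as [m1 H1]. destruct (H (S n)) as [m2 H2].
    exists (m1 + m2)%Z. rewrite H1, H2, plus_IZR. Rring.
Qed.

Lemma pow_diff (X Nz : Z) j : exists w : Z, (IZR X + IZR Nz) ^ j - IZR X ^ j = IZR Nz * IZR w.
Proof.
  induction j.
  - exists 0%Z. simpl. ring.
  - destruct IHj as [w Hw]. exists ((X + Nz) * w + X ^ Z.of_nat j)%Z.
    rewrite plus_IZR, mult_IZR, plus_IZR, <- pow_IZR. simpl.
    replace ((IZR X + IZR Nz) * (IZR X + IZR Nz) ^ j - IZR X * IZR X ^ j)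
      with ((IZR X + IZR Nz) * ((IZR X + IZR Nz) ^ j - IZR X ^ j) + IZR Nz * IZR X ^ j) by ring.
    rewrite Hw. ring.
Qed.

Lemma sum_split (f : nat -> CC) n : (1 <= n)%nat ->
  @sum_n C_AbelianMonoid f n = (f O + f 1%nat + @sum_n C_AbelianMonoid (fun j => if Nat.leb 2 j then f j else RtoC 0) n)%C.
Proof.
  induction n; intros Hn; [lia|].
  destruct n.
  - rewrite sumC_S, !sum_O. simpl. rewrite sumC_S, sum_O. simpl. Cring.
  - rewrite (sumC_S f (S n)), IHn by lia. rewrite (sumC_S _ (S n)).
    change (if Nat.leb 2 (S (S n)) then _ else _) with (f (S (S n))). Cring.
Qed.

Section Case2.
Variable a : nat -> CC.
Variable K : nat.
Hypothesis HK : (2 <= K)%nat.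
Hypothesis HaK : a K <> RtoC 0.
Hypothesis Hq : forall j, (2 <= j <= K)%nat -> exists q : Q, a j = (0, Q2R q).

Definition b (j : nat) : R := Im (a j).
Definition Qs (y : R) : R := @sum_n R_AbelianMonoid (fun j => if Nat.leb 2 j then b j * y ^ j else 0) K.

Lemma Re_a_zero j : (2 <= j <= K)%nat -> Re (a j) = 0.
Proof. intros H. destruct (Hq j H) as [q E]. rewrite E. reflexivity. Qed.

Lemma Pk_split k : Pk a K k = (a O + a 1%nat * RtoC (INR k) + (0, Qs (INR k)))%C.
Proof.
  assert (Hs : @sum_n C_AbelianMonoid (fun j => if Nat.leb 2 j then (a j * RtoC (INR k) ^ j)%C else RtoC 0) K = (0, Qs (INR k))).
  { apply C_ext.
    + rewrite Re_sumC. change (Re (0, Qs (INR k))) with 0.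
      transitivity (@sum_n R_AbelianMonoid (fun _ => 0) K); [|apply sumR_zero]. apply sumR_ext_loc.
      intros j Hj. destruct (Nat.leb 2 j) eqn:E.
      * apply Nat.leb_le in E. rewrite <- RtoC_pow, re_scal_r, Re_a_zero by lia. ring.
      * reflexivity.
    + rewrite Im_sumC. change (Im (0, Qs (INR k))) with (Qs (INR k)). unfold Qs. apply sumR_ext.
      intros j. destruct (Nat.leb 2 j).
      * rewrite <- RtoC_pow, im_scal_r. reflexivity.
      * reflexivity. }
  unfold Pk. rewrite sum_split by lia. cbv beta. rewrite Hs. simpl. Cring.
Qed.

Lemma int_coeffs_aux n : exists D : Z, (0 < D)%Z /\ exists z : nat -> Z,
  forall j, (2 <= j <= K)%nat -> (j <= n)%nat -> IZR D * b j = IZR (z j).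
Proof.
  induction n.
  - exists 1%Z. split; [lia|]. exists (fun _ => 0%Z). intros; lia.
  - destruct IHn as [D [HD [z Hz]]].
    destruct (le_lt_dec 2 (S n)) as [H2|H2]; [destruct (le_lt_dec (S n) K) as [H3|H3]|].
    + destruct (Hq (S n) (conj H2 H3)) as [q Eq].
      exists (D * Zpos (Qden q))%Z. split; [lia|].
      exists (fun j => if Nat.eqb j (S n) then (D * Qnum q)%Z else (z j * Zpos (Qden q))%Z).
      intros j Hj Hjn. destruct (Nat.eqb j (S n)) eqn:E.
      * apply Nat.eqb_eq in E. subst j. unfold b. rewrite Eq. simpl. unfold Q2R.
        rewrite !mult_IZR. field. apply not_0_IZR. lia.
      * apply Nat.eqb_neq in E. rewrite mult_IZR, mult_IZR, <- Hz by lia. ring.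
    + exists D. split; auto. exists z. intros; apply Hz; lia.
    + exists D. split; auto. exists z. intros; apply Hz; lia.
Qed.

Lemma int_coeffs : exists D : Z, (0 < D)%Z /\ exists z : nat -> Z,
  forall j, (2 <= j <= K)%nat -> IZR D * b j = IZR (z j).
Proof.
  destruct (int_coeffs_aux K) as [D [HD [z Hz]]]. exists D. split; auto. exists z.
  intros; apply Hz; lia.
Qed.

Lemma DQs_eq D z : (forall j, (2 <= j <= K)%nat -> IZR D * b j = IZR (z j)) ->
  forall y, IZR D * Qs y = @sum_n R_AbelianMonoid (fun j => if Nat.leb 2 j then IZR (z j) * y ^ j else 0) K.
Proof.
  intros Hz y. unfold Qs. rewrite <- sumR_mult_l. apply sumR_ext_loc.
  intros j Hj. destruct (Nat.leb 2 j) eqn:E.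
  - apply Nat.leb_le in E. rewrite <- Hz by lia. ring.
  - ring.
Qed.

Lemma DQs_int D z : (forall j, (2 <= j <= K)%nat -> IZR D * b j = IZR (z j)) ->
  forall w : Z, exists m : Z, IZR D * Qs (IZR w) = IZR m.
Proof.
  intros Hz w. rewrite (DQs_eq D z Hz). apply sumR_int.
  intros j. destruct (Nat.leb 2 j).
  - exists (z j * w ^ Z.of_nat j)%Z. rewrite mult_IZR, pow_IZR. reflexivity.
  - exists 0%Z. reflexivity.
Qed.

Lemma DQs_period D z : (forall j, (2 <= j <= K)%nat -> IZR D * b j = IZR (z j)) ->
  forall w Nz : Z, exists m : Z, IZR D * (Qs (IZR w + IZR Nz) - Qs (IZR w)) = IZR Nz * IZR m.
Proof.
  intros Hz w Nz. rewrite Rmult_minus_distr_l, !(DQs_eq D z Hz), <- sumR_minus.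
  apply sumR_mulN. intros j. destruct (Nat.leb 2 j).
  - destruct (pow_diff w Nz j) as [u Hu]. exists (z j * u)%Z. rewrite mult_IZR.
    replace (IZR (z j) * (IZR w + IZR Nz) ^ j - IZR (z j) * IZR w ^ j)
      with (IZR (z j) * ((IZR w + IZR Nz) ^ j - IZR w ^ j)) by ring.
    rewrite Hu. ring.
  - exists 0%Z. ring.
Qed.

Lemma Qs_0 : Qs 0 = 0.
Proof.
  unfold Qs. transitivity (@sum_n R_AbelianMonoid (fun _ => 0) K); [|apply sumR_zero]. apply sumR_ext. intros j.
  destruct (Nat.leb 2 j) eqn:E; auto.
  apply Nat.leb_le in E. rewrite pow_i by lia. ring.
Qed.

Lemma sumR_opp (f : nat -> R) n : @sum_n R_AbelianMonoid (fun j => - f j) n = - @sum_n R_AbelianMonoid f n.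
Proof.
  induction n.
  - rewrite !sum_O. reflexivity.
  - rewrite !sumR_S, IHn. Rring.
Qed.

Lemma E_nonzero : exists n0 : nat, Qs (INR n0 + 2) - Qs (INR n0) - Qs 2 <> 0.
Proof.
  apply NNPP. intro Hn.
  assert (Hall : forall n : nat, Qs (INR n + 2) = Qs (INR n) + Qs 2).
  { intros n. apply NNPP. intro E. apply Hn. exists n. intro E2. apply E. lra. }
  assert (Hlin : forall m : nat, Qs (2 * INR m) = INR m * Qs 2).
  { induction m.
    - simpl. rewrite Rmult_0_r, Qs_0. ring.
    - rewrite S_INR. replace (2 * (INR m + 1)) with (INR (2 * m) + 2) by (rewrite mult_INR; simpl; ring).
      rewrite Hall. replace (INR (2 * m)) with (2 * INR m) by (rewrite mult_INR; simpl; ring).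
      rewrite IHm. ring. }
  set (c := fun j => if Nat.leb 2 j then b j * 2 ^ j else 0).
  assert (Hc : forall y, Qs (2 * y) = @sum_n R_AbelianMonoid (fun j => c j * y ^ j) K).
  { intros y. unfold Qs. apply sumR_ext. intros j. unfold c. destruct (Nat.leb 2 j).
    - rewrite Rpow_mult_distr. ring.
    - ring. }
  assert (HbK : b K <> 0).
  { intro E. apply HaK. apply C_ext.
    - rewrite Re_a_zero by lia. reflexivity.
    - unfold b in E. rewrite E. reflexivity. }
  destruct K as [|m'] eqn:EK; [lia|].
  assert (HcK : c (S m') = b (S m') * 2 ^ S m').
  { unfold c. replace (Nat.leb 2 (S m')) with true; auto. symmetry. apply Nat.leb_le. lia. }
  assert (H2p : 0 < 2 ^ S m') by (apply pow_lt; lra).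
  destruct (Rlt_or_le 0 (b (S m'))) as [Hpos|Hneg].
  - assert (HcKp : 0 < c (S m')) by (rewrite HcK; nra).
    destruct (poly_growth c m' 0 (Qs 2) ltac:(lia) HcKp) as [Y [HY1 HY]].
    destruct (INR_archimed 1 Y ltac:(lra)) as [k Hk].
    specialize (HY (INR k) ltac:(lra)). rewrite <- Hc, Hlin in HY. lra.
  - assert (Hneg' : b (S m') < 0) by (destruct Hneg; auto; congruence).
    assert (HcKp : 0 < - c (S m')) by (rewrite HcK; nra).
    destruct (poly_growth (fun j => - c j) m' 0 (- Qs 2) ltac:(lia) HcKp) as [Y [HY1 HY]].
    destruct (INR_archimed 1 Y ltac:(lra)) as [k Hk].
    specialize (HY (INR k) ltac:(lra)).
    rewrite (sumR_ext _ (fun j => - (c j * INR k ^ j))) in HY by (intros; ring).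
    rewrite sumR_opp, <- Hc, Hlin in HY. lra.
Qed.

End Case2.

Section DFT.
Variable Nm : nat.
Hypothesis HNm : (1 <= Nm)%nat.
Let N := S Nm.
Variable chi : nat -> CC.
Hypothesis Hper : forall k, chi (k + N)%nat = chi k.

Definition zeta := cexp (0, 2 * PI / INR N).

Lemma INR_N_pos : 0 < INR N.
Proof. apply lt_0_INR. unfold N. lia. Qed.

Lemma zeta_pow m : (zeta ^ m)%C = cexp (0, 2 * PI * INR m / INR N).
Proof.
  unfold zeta. rewrite <- cexp_pow. f_equal. apply C_ext; simpl; field; apply Rgt_not_eq, INR_N_pos.
Qed.

Lemma zeta_one m : (zeta ^ m)%C = RtoC 1 <-> exists w, m = (N * w)%nat.
Proof.
  pose proof INR_N_pos. pose proof PI_RGT_0.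
  split.
  - intros H1. rewrite zeta_pow in H1. apply cexp_i_eq1 in H1. destruct H1 as [w Hw].
    assert (E : INR m = INR N * IZR w).
    { apply (Rmult_eq_reg_l (2 * PI)); [|lra].
      apply (Rmult_eq_reg_r (/ INR N)); [|apply Rinv_neq_0_compat; lra].
      replace (2 * PI * INR m * / INR N) with (2 * PI * INR m / INR N) by (unfold Rdiv; ring).
      rewrite Hw. field. lra. }
    rewrite !INR_IZR_INZ, <- mult_IZR in E. apply eq_IZR in E.
    exists (Z.to_nat w). assert (0 <= w)%Z by nia. lia.
  - intros [w ->]. rewrite zeta_pow.
    replace (2 * PI * INR (N * w) / INR N) with (2 * PI * IZR (Z.of_nat w)).
    + apply cexp_i_2pi.
    + rewrite mult_INR, <- INR_IZR_INZ. field. lra.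
Qed.

Lemma zeta_N : (zeta ^ N)%C = RtoC 1.
Proof. apply zeta_one. exists 1%nat. lia. Qed.

Lemma chi_mod k : chi k = chi (k mod N).
Proof.
  rewrite (Nat.div_mod_eq k N) at 1.
  generalize (k / N)%nat. intros q. induction q.
  - f_equal. lia.
  - replace (N * S q + k mod N)%nat with ((N * q + k mod N) + N)%nat by lia.
    rewrite Hper. auto.
Qed.

Definition alpha (j : nat) : CC :=
  (RtoC (/ INR N) * @sum_n C_AbelianMonoid (fun r => chi r * zeta ^ (j * (N - r)))%C Nm)%C.

Lemma dft k : @sum_n C_AbelianMonoid (fun j => alpha j * zeta ^ (j * k))%C Nm = chi k.
Proof.
  pose proof INR_N_pos.
  set (u := fun r j => (RtoC (/ INR N) * chi r * (zeta ^ (k + (N - r))) ^ j)%C).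
  rewrite (sumC_ext _ (fun j => @sum_n C_AbelianMonoid (fun r => u r j) Nm)).
  2:{ intros j. unfold alpha. rewrite <- Cmult_assoc, <- sumC_mult_r, <- sumC_mult_l. apply sumC_ext.
      intros r. unfold u. rewrite <- Cpow_mult_r.
      replace ((k + (N - r)) * j)%nat with (j * (N - r) + j * k)%nat by lia.
      rewrite Cpow_add_r. ring. }
  rewrite <- sumC_switch. unfold u.
  rewrite (sumC_ext _ (fun r => RtoC (/ INR N) * chi r * @sum_n C_AbelianMonoid (fun j => (zeta ^ (k + (N - r))) ^ j)%C Nm)%C).
  2:{ intros r. rewrite <- sumC_mult_l. reflexivity. }
  assert (Hp : (k mod N <= Nm)%nat) by (pose proof (Nat.mod_upper_bound k N ltac:(unfold N; lia)); unfold N in *; lia).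
  rewrite (sumC_single _ (k mod N) Nm Hp).
  - assert (Hw : (zeta ^ (k + (N - k mod N)))%C = RtoC 1).
    { apply zeta_one. exists (k / N + 1)%nat. pose proof (Nat.div_mod_eq k N).
      pose proof (Nat.mod_upper_bound k N ltac:(unfold N; lia)). lia. }
    rewrite Hw, geom_sum1. fold N. rewrite <- chi_mod.
    transitivity (chi k * (RtoC (/ INR N) * RtoC (INR N)))%C; [Cring|].
    rewrite <- RtoC_mult, Rinv_l by lra. Cring.
  - intros r Hr Hne.
    rewrite geom_sum0.
    + Cring.
    + intro E. apply zeta_one in E. destruct E as [w Hw]. apply Hne.
      pose proof (Nat.div_mod_eq k N). pose proof (Nat.mod_upper_bound k N ltac:(unfold N; lia)).
      assert (Hr' : (r < N)%nat) by (unfold N; lia).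
      set (q := (k / N)%nat) in *. set (rho := (k mod N)%nat) in *.
      destruct (lt_eq_lt_dec w (q + 1)) as [[Hlt|Heq]|Hgt]; nia.
    + rewrite <- Cpow_mult_r. apply zeta_one. exists (k + (N - r))%nat. unfold N. lia.
Qed.

End DFT.

Lemma prodR_nonneg (f : nat -> R) n : (forall j, 0 <= f j) -> 0 <= prodR f n.
Proof. intros H. induction n; simpl; auto. apply Rmult_le_pos; auto. Qed.

Lemma final_contra (q : (R -> CC) -> R) (Hq : cont_seminormA q) (Nm js : nat)
  (w : nat -> CC) (coef : nat -> CC) (m : R) :
  (js <= Nm)%nat -> 0 < m -> Im (w js) = m -> coef js <> RtoC 0 ->
  (forall j, (j <= Nm)%nat -> j <> js -> w j <> w js) ->
  (forall L, q (fun y => evalS 0 L (RtoC y)) = Cmod (@sum_n C_AbelianMonoid (fun j => coef j * evalS 0 L (w j))%C Nm)) ->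
  False.
Proof.
  intros Hjs Hm Hwm Hc Hdist Hform.
  destruct (proj2 Hq (fun z => Rabs (Im z) < m / 2) (nbhdR_strip (m/2) ltac:(lra)))
    as [Kc [M [HKc [HKU [HM Hbound]]]]].
  destruct (compact_bounded Kc HKc) as [R0 [HR0 HKR]].
  set (L := R0 ^ 2 / m + 1).
  assert (HL : 0 < L) by (unfold L; pose proof (pow2_ge_0 R0); assert (0 <= R0 ^ 2 / m) by (apply Rdiv_le_0_compat; lra); lra).
  set (cc := (0, - L) : CC).
  set (ws := w js).
  set (F := fun z => prodC (fun j => if Nat.eqb j js then RtoC 1 else (z - w j)%C) Nm).
  set (p := fun (n : nat) (z : CC) => (F z * (z - cc) ^ n)%C).
  assert (Hpoly : forall n, ispoly (p n)).
  { intros n. apply (ispoly_mul F (fun z => ((z - cc) ^ n)%C)).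
    - apply (ispoly_prodC (fun j z => if Nat.eqb j js then RtoC 1 else (z - w j)%C)).
      intros j. destruct (Nat.eqb j js); [apply ispoly_const|apply ispoly_lin].
    - apply (ispoly_pow (fun z => (z - cc)%C)). apply ispoly_lin. }
  assert (Hval : forall n, q (fun y => p n (RtoC y)) = Cmod (coef js * F ws)%C * Cmod (ws - cc)%C ^ n).
  { intros n. destruct (Hpoly n) as [Ln HLn].
    replace (fun y => p n (RtoC y)) with (fun y => evalS 0 Ln (RtoC y))
      by (apply functional_extensionality; intros y; rewrite HLn; reflexivity).
    rewrite Hform. rewrite (sumC_single _ js Nm Hjs).
    - rewrite <- HLn. unfold p. rewrite !Cmod_mult, Cmod_pow. fold ws. ring.
    - intros j Hj Hne. rewrite <- HLn. unfold p, F.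
      rewrite (prodC_zero _ Nm j Hj).
      + ring.
      + replace (Nat.eqb j js) with false by (symmetry; apply Nat.eqb_neq; auto). ring. }
  set (BF := prodR (fun j => if Nat.eqb j js then 1 else R0 + Cmod (w j)) Nm).
  set (rho := sqrt (R0 ^ 2 + (m / 2 + L) ^ 2)).
  assert (Hbd : forall n, q (fun y => p n (RtoC y)) <= M * (BF * rho ^ n)).
  { intros n. apply Hbound.
    - intros z _. destruct (Hpoly n) as [Ln HLn].
      apply (ex_derive_ext (evalS 0 Ln)); [intros; symmetry; apply HLn|]. apply holo_evalS.
    - intros z Hz. specialize (HKR z Hz). specialize (HKU z Hz). simpl in HKU.
      unfold p. rewrite Cmod_mult, Cmod_pow. apply Rmult_le_compat.
      + apply Cmod_ge_0.
      + apply pow_le, Cmod_ge_0.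
      + unfold F, BF. apply prodC_bound. intros j Hj. destruct (Nat.eqb j js).
        * rewrite Cmod_1. lra.
        * eapply Rle_trans; [apply Cmod_triangle|]. rewrite Cmod_opp. lra.
      + apply pow_incr. split; [apply Cmod_ge_0|].
        unfold Cmod, rho. apply sqrt_le_1_alt. simpl.
        pose proof (re_le_Cmod z). pose proof (Cmod_ge_0 z).
        assert (Hre : Rabs (fst z) <= R0) by (unfold Re in *; lra).
        assert (Him : Rabs (snd z) < m / 2) by (unfold Im in *; lra).
        apply Rabs_def2 in Him.
        assert (fst z * fst z <= R0 * R0).
        { rewrite <- (Rabs_right (fst z * fst z)) by (apply Rle_ge, Rle_0_sqr).
          rewrite Rabs_mult. apply Rmult_le_compat; auto; apply Rabs_pos. }
        nra. }
  set (A := Cmod (coef js * F ws)%C).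
  assert (HA : 0 < A).
  { unfold A. rewrite Cmod_mult. apply Rmult_lt_0_compat; apply Cmod_gt_0; [auto|].
    unfold F. apply prodC_nz. intros j Hj. destruct (Nat.eqb j js) eqn:Ej.
    - intro E1. injection E1 as E1. lra.
    - apply Nat.eqb_neq in Ej. intro E1. apply (Hdist j Hj Ej).
      replace (w j) with (ws - (ws - w j))%C by ring. rewrite E1. unfold ws. ring. }
  set (rho' := Cmod (ws - cc)%C).
  assert (Hrho' : m + L <= rho').
  { unfold rho'. pose proof (im_le_Cmod' (ws - cc)%C).
    replace (Im (ws - cc)%C) with (m + L) in H.
    - pose proof (Rle_abs (m + L)). lra.
    - unfold cc, ws. simpl. unfold Im in Hwm. rewrite Hwm. ring. }
  assert (Hrho0 : 0 <= rho) by (unfold rho; apply sqrt_pos).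
  assert (Hrr : rho < rho').
  { apply Rlt_le_trans with (m + L); [|auto].
    unfold rho. rewrite <- (sqrt_pow2 (m + L)) by lra. apply sqrt_lt_1_alt. split.
    - pose proof (pow2_ge_0 R0). pose proof (pow2_ge_0 (m/2 + L)). lra.
    - assert (Hml : m * L = R0 ^ 2 + m).
      { unfold L. field. lra. }
      nra. }
  assert (Hrho'0 : 0 < rho') by lra.
  assert (HBF : 0 <= BF).
  { unfold BF. apply prodR_nonneg. intros j. destruct (Nat.eqb j js); [lra|].
    pose proof (Cmod_ge_0 (w j)). lra. }
  set (th := rho / rho').
  assert (Hth : Rabs th < 1).
  { unfold th. rewrite Rabs_right.
    - apply (Rmult_lt_reg_r rho'); auto. unfold Rdiv. rewrite Rmult_assoc, Rinv_l by lra. lra.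
    - apply Rle_ge, Rdiv_le_0_compat; lra. }
  destruct (pow_lt_1_zero th Hth (A / (M * BF + 1))) as [n Hn].
  { apply Rdiv_lt_0_compat; auto. pose proof (Rmult_le_pos M BF HM HBF). lra. }
  specialize (Hn n (le_n n)).
  specialize (Hbd n). rewrite Hval in Hbd. fold A in Hbd. fold rho' in Hbd.
  rewrite Rabs_right in Hn by (apply Rle_ge, pow_le; unfold th; apply Rdiv_le_0_compat; lra).
  assert (Hpow : th ^ n * rho' ^ n = rho ^ n).
  { unfold th. rewrite <- Rpow_mult_distr. f_equal. field. lra. }
  assert (Hr'n : 0 < rho' ^ n) by (apply pow_lt; lra).
  assert (HMB : 0 <= M * BF) by (apply Rmult_le_pos; auto).
  assert (Hth0 : 0 <= th ^ n) by (apply pow_le; unfold th; apply Rdiv_le_0_compat; lra).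
  assert (A <= M * BF * th ^ n).
  { apply (Rmult_le_reg_r (rho' ^ n)); auto.
    replace (M * BF * th ^ n * rho' ^ n) with (M * (BF * (th ^ n * rho' ^ n))) by ring.
    rewrite Hpow. lra. }
  assert (M * BF * th ^ n < A).
  { apply (Rmult_lt_compat_r (M * BF + 1)) in Hn; [|lra].
    replace (A / (M * BF + 1) * (M * BF + 1)) with A in Hn by (field; lra).
    nra. }
  lra.
Qed.

Lemma zeta_inj Nm (HNm : (1 <= Nm)%nat) j j' : (j <= Nm)%nat -> (j' <= Nm)%nat ->
  (zeta Nm ^ j)%C = (zeta Nm ^ j')%C -> j = j'.
Proof.
  assert (Hz : zeta Nm <> RtoC 0) by apply cexp_nonzero.
  assert (Gen : forall j j', (j < j' <= Nm)%nat -> (zeta Nm ^ j)%C = (zeta Nm ^ j')%C -> False).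
  { intros i i' Hii E. replace i' with (i + (i' - i))%nat in E by lia.
    rewrite Cpow_add_r in E.
    assert (E2 : (zeta Nm ^ (i' - i))%C = RtoC 1).
    { pose proof (Cpow_nz _ i Hz) as Hnz.
      transitivity (/ (zeta Nm ^ i) * (zeta Nm ^ i * zeta Nm ^ (i' - i)))%C.
      - field. auto.
      - rewrite <- E. field. auto. }
    apply (zeta_one Nm HNm) in E2. destruct E2 as [w Hw]. destruct w; [lia|]. rewrite Nat.mul_succ_r in Hw. lia. }
  intros Hj Hj' E. destruct (lt_eq_lt_dec j j') as [[Hlt|Heq]|Hgt]; auto.
  - exfalso. apply (Gen j j'); auto.
  - exfalso. apply (Gen j' j); auto.
Qed.

Lemma case2 (T : R -> opA) a K : (2 <= K)%nat -> a K <> RtoC 0 ->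
  (forall j, (2 <= j <= K)%nat -> exists q : Q, a j = (0, Q2R q)) ->
  C0_semigroup T -> generates (Ptheta a K) T -> False.
Proof.
  intros HK HaK Hq HC HG.
  destruct (int_coeffs a K HK Hq) as [D [HD [z Hz]]].
  destruct (E_nonzero a K HK HaK Hq) as [n0 Hn0].
  destruct (DQs_int a K HK D z Hz (Z.of_nat n0 + 2)) as [m1 Hm1].
  destruct (DQs_int a K HK D z Hz (Z.of_nat n0)) as [m2 Hm2].
  destruct (DQs_int a K HK D z Hz 2) as [m3 Hm3].
  set (Ez := (m1 - m2 - m3)%Z).
  assert (HEz : IZR D * (Qs a K (INR n0 + 2) - Qs a K (INR n0) - Qs a K 2) = IZR Ez).
  { unfold Ez. rewrite !minus_IZR, <- Hm1, <- Hm2, <- Hm3, plus_IZR, <- INR_IZR_INZ. ring. }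
  assert (HD0 : IZR D <> 0) by (apply not_0_IZR; lia).
  assert (HEz0 : Ez <> 0%Z).
  { intro E. rewrite E in HEz. apply Hn0. apply (Rmult_eq_reg_l (IZR D)); auto. rewrite HEz. ring. }
  set (Nm := Z.abs_nat Ez).
  assert (HNm : (1 <= Nm)%nat) by (unfold Nm; lia).
  assert (HNpos : 0 < INR (S Nm)) by (apply lt_0_INR; lia).
  assert (HDpos : 0 < IZR D) by (apply IZR_lt; lia).
  set (t := 2 * PI * IZR D / INR (S Nm)).
  assert (Ht : 0 < t).
  { unfold t. pose proof PI_RGT_0. apply Rdiv_lt_0_compat; auto. nra. }
  set (chi := fun k : nat => cexp (0, t * Qs a K (INR k))).
  assert (Hper : forall k, chi (k + S Nm)%nat = chi k).
  { intros k. unfold chi. destruct (DQs_period a K HK D z Hz (Z.of_nat k) (Z.of_nat (S Nm))) as [mm Hmm].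
    rewrite <- !INR_IZR_INZ in Hmm. rewrite plus_INR.
    replace (t * Qs a K (INR k + INR (S Nm))) with (t * Qs a K (INR k) + 2 * PI * IZR mm).
    - replace (0, t * Qs a K (INR k) + 2 * PI * IZR mm) with ((0, t * Qs a K (INR k))%R + (0, 2 * PI * IZR mm)%R)%C
        by (apply C_ext; simpl; ring).
      rewrite cexp_add, cexp_i_2pi. ring.
    - replace (t * Qs a K (INR k + INR (S Nm))) with
        (t * Qs a K (INR k) + 2 * PI / INR (S Nm) * (IZR D * (Qs a K (INR k + INR (S Nm)) - Qs a K (INR k))))
        by (unfold t; field; lra).
      rewrite Hmm. field. lra. }
  set (ze := zeta Nm).
  set (al := alpha Nm chi).
  pose proof (dft Nm HNm chi Hper) as Hdft. fold ze al in Hdft.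
  set (lam := cexp (RtoC t * a 1%nat)).
  set (e0 := cexp (RtoC t * a 0%nat)).
  assert (Hexp : forall k, cexp (RtoC t * Pk a K k) = (e0 * lam ^ k * chi k)%C).
  { intros k. rewrite (Pk_split a K HK Hq k).
    replace (RtoC t * (a 0%nat + a 1%nat * RtoC (INR k) + (0, Qs a K (INR k))%R))%C
      with (RtoC t * a 0%nat + RtoC (INR k) * (RtoC t * a 1%nat) + (0, t * Qs a K (INR k))%R)%C.
    - rewrite !cexp_add, cexp_pow. reflexivity.
    - apply C_ext; simpl; ring. }
  assert (Hex : exists js, (js <= Nm)%nat /\ al js <> RtoC 0 /\ Im (lam * ze ^ js)%C <> 0).
  { apply NNPP. intro Hn.
    assert (Hre : forall j, (j <= Nm)%nat -> al j <> RtoC 0 -> Im (lam * ze ^ j)%C = 0).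
    { intros j Hj Ha. apply NNPP. intro Hi. apply Hn. exists j. auto. }
    assert (Hcz : (Cconj ze * ze)%C = RtoC 1).
    { unfold ze, zeta. set (th := 2 * PI / INR (S Nm)). clearbody th.
      unfold cexp. simpl. rewrite exp_0. pose proof (sin2_cos2 th). unfold Rsqr in H.
      apply C_ext; simpl; nra. }
    assert (Hlam : lam <> RtoC 0) by apply cexp_nonzero.
    set (c := (Cconj lam / lam)%C).
    assert (Hz2 : forall j, (j <= Nm)%nat -> al j <> RtoC 0 -> (ze ^ j * ze ^ j)%C = c).
    { intros j Hj Ha. specialize (Hre j Hj Ha).
      assert (Hreal : (lam * ze ^ j)%C = Cconj (lam * ze ^ j)%C).
      { apply C_ext; [rewrite re_conj; reflexivity|rewrite im_conj, Hre; ring]. }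
      rewrite Cmult_conj, Cpow_conj in Hreal.
      unfold c. transitivity ((lam * ze ^ j) * ze ^ j / lam)%C; [field; auto|]. rewrite Hreal.
      transitivity (Cconj lam * (Cconj ze * ze) ^ j / lam)%C.
      - rewrite Cpow_mult_l. field. auto.
      - rewrite Hcz, Cpow_1_l. field. auto. }
    assert (Hchi2 : forall k, chi (k + 2)%nat = (c * chi k)%C).
    { intros k. rewrite <- !Hdft. rewrite <- sumC_mult_l. apply sumC_ext_loc. intros j Hj.
      destruct (classic (al j = RtoC 0)) as [E|E].
      - rewrite E. ring.
      - replace (j * (k + 2))%nat with (j * k + j + j)%nat by lia.
        rewrite !Cpow_add_r.
        rewrite <- (Hz2 j Hj E). ring. }
    assert (Hchi0 : chi 0%nat = RtoC 1).
    { unfold chi. simpl INR. rewrite (Qs_0 a K HK). rewrite Rmult_0_r. apply cexp_0. }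
    assert (Hc : c = chi 2%nat).
    { pose proof (Hchi2 0%nat) as H0. change (0 + 2)%nat with 2%nat in H0. rewrite H0, Hchi0. ring. }
    specialize (Hchi2 n0). rewrite Hc in Hchi2. unfold chi in Hchi2.
    rewrite plus_INR in Hchi2. simpl (INR 2) in Hchi2.
    replace (1 + 1) with 2 in Hchi2 by ring.
    set (Y := cexp ((0, t * Qs a K 2)%R + (0, t * Qs a K (INR n0))%R)%C) in *.
    assert (HY : Y <> RtoC 0) by apply cexp_nonzero.
    assert (HX : cexp (0, t * (Qs a K (INR n0 + 2) - Qs a K (INR n0) - Qs a K 2)) = RtoC 1).
    { assert (E1 : (cexp (0, t * (Qs a K (INR n0 + 2) - Qs a K (INR n0) - Qs a K 2))%R * Y)%C = Y).
      { unfold Y. rewrite <- cexp_add.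
        replace ((0, t * (Qs a K (INR n0 + 2) - Qs a K (INR n0) - Qs a K 2))%R +
                 ((0, t * Qs a K 2)%R + (0, t * Qs a K (INR n0))%R))%C
          with (0, t * Qs a K (INR n0 + 2))%R by (apply C_ext; simpl; ring).
        rewrite Hchi2. unfold Y. rewrite cexp_add. reflexivity. }
      transitivity (cexp (0, t * (Qs a K (INR n0 + 2) - Qs a K (INR n0) - Qs a K 2))%R * Y / Y)%C.
      - field. auto.
      - rewrite E1. field. auto. }
    apply cexp_i_eq1 in HX. destruct HX as [w Hw].
    assert (Hw2 : IZR Ez = INR (S Nm) * IZR w).
    { rewrite <- HEz. unfold t in Hw. pose proof PI_RGT_0.
      apply (Rmult_eq_reg_l (2 * PI / INR (S Nm))).
      - replace (2 * PI / INR (S Nm) * (IZR D * (Qs a K (INR n0 + 2) - Qs a K (INR n0) - Qs a K 2)))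
          with (2 * PI * IZR D / INR (S Nm) * (Qs a K (INR n0 + 2) - Qs a K (INR n0) - Qs a K 2)) by (field; lra).
        rewrite Hw. field. lra.
      - apply Rgt_not_eq. apply Rdiv_lt_0_compat; lra. }
    rewrite INR_IZR_INZ, <- mult_IZR in Hw2. apply eq_IZR in Hw2.
    unfold Nm in Hw2. rewrite Nat2Z.inj_succ, Zabs2Nat.id_abs in Hw2.
    destruct (Z.eq_dec w 0) as [->|Hw0]; [lia|].
    assert (H1 : Z.abs Ez = Z.abs ((Z.abs Ez + 1) * w)) by (f_equal; exact Hw2).
    rewrite Z.abs_mul, (Z.abs_eq (Z.abs Ez + 1)) in H1 by lia.
    assert (1 <= Z.abs w)%Z by lia. nia. }
  destruct Hex as [js [Hjs [Hal Him]]].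
  set (x0 := if Rlt_dec 0 (Im (lam * ze ^ js)%C) then 1 else -1).
  assert (Hx0 : 0 < x0 * Im (lam * ze ^ js)%C /\ x0 <> 0).
  { unfold x0. destruct (Rlt_dec 0 (Im (lam * ze ^ js)%C)).
    - split; lra.
    - split; [|lra]. assert (Im (lam * ze ^ js)%C < 0) by lra. lra. }
  set (wf := fun j => (lam * ze ^ j * RtoC x0)%C).
  assert (Hmono : forall s, (cexp (RtoC t * Pk a K s) * RtoC x0 ^ s)%C =
      (e0 * @sum_n C_AbelianMonoid (fun j => al j * wf j ^ s)%C Nm)%C).
  { intros s. rewrite Hexp, <- Hdft.
    transitivity (e0 * @sum_n C_AbelianMonoid (fun j => al j * ze ^ (j * s)) Nm * (lam ^ s * RtoC x0 ^ s))%C; [ring|].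
    rewrite <- Cmult_assoc. f_equal. rewrite <- sumC_mult_r. apply sumC_ext. intros j.
    unfold wf. rewrite !Cpow_mult_l, <- Cpow_mult_r. ring. }
  assert (HTS : forall s L, TS a K t x0 s L = (e0 * @sum_n C_AbelianMonoid (fun j => al j * evalS s L (wf j))%C Nm)%C).
  { intros s L. revert s. induction L as [|c L IH]; intros s; simpl.
    - rewrite (sumC_ext _ (fun _ => RtoC 0)) by (intros; ring). rewrite sumC_zero. ring.
    - rewrite IH, Hmono.
      rewrite (sumC_ext (fun j => al j * (c * wf j ^ s + evalS (S s) L (wf j)))%C
                        (fun j => c * (al j * wf j ^ s) + al j * evalS (S s) L (wf j))%C) by (intros; ring).
      rewrite sumC_plus, sumC_mult_l. ring. }
  pose proof (comp_cont (T t) _ (T_lin T HC t ltac:(lra)) (eval_cont x0)) as Hq'.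
  apply (final_contra _ Hq' Nm js wf (fun j => e0 * al j)%C (x0 * Im (lam * ze ^ js)%C) Hjs (proj1 Hx0)).
  - unfold wf. rewrite im_scal_r. ring.
  - rewrite Cmod_gt_0. rewrite Cmod_mult. apply Rmult_lt_0_compat; apply Cmod_gt_0; auto.
    apply cexp_nonzero.
  - intros j Hj Hne E. apply Hne. apply (zeta_inj Nm HNm j js Hj Hjs).
    unfold wf in E. fold ze.
    assert (Hlx : (lam * RtoC x0)%C <> RtoC 0).
    { apply Cmod_gt_0. rewrite Cmod_mult, Cmod_R. apply Rmult_lt_0_compat.
      - apply Cmod_gt_0, cexp_nonzero.
      - apply Rabs_pos_lt. tauto. }
    assert (E' : (lam * ze ^ j * RtoC x0)%C = (lam * ze ^ js * RtoC x0)%C) by exact E.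
    assert (Hx0C : RtoC x0 <> RtoC 0) by (intro E2; apply RtoC_inj in E2; tauto).
    assert (Hlam : lam <> RtoC 0) by apply cexp_nonzero.
    transitivity (/ (lam * RtoC x0) * (lam * ze ^ j * RtoC x0))%C; [field; repeat split; auto|].
    rewrite E'. field. repeat split; auto.
  - intros L. simpl.
    rewrite (T_evalS T a K HC HG t ltac:(lra) x0 0 L), HTS.
    rewrite <- sumC_mult_l. f_equal. apply sumC_ext. intros j. ring.
Qed.

Theorem mainTheorem7 (a : nat -> Complex.C) (K : nat) :
  (2 <= K)%nat -> a K <> RtoC 0 ->
  ((exists l : nat, (2 <= l <= K)%nat /\
      (forall j, (l < j <= K)%nat -> Re (a j) = 0) /\ 0 < Re (a l))
   \/
   (forall j, (2 <= j <= K)%nat -> exists q : Q, a j = (0, Q2R q))) ->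
  ~ exists T : R -> opA, C0_semigroup T /\ generates (Ptheta a K) T.
Proof.
  intros HK HaK [[l [Hl [Hz Hp]]]|Hq] [T [HC HG]].
  - exact (case1 T a K HC HG l Hl Hz Hp).
  - exact (case2 T a K HK HaK Hq HC HG).
Qed.
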